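(* Let $\alpha=(\alpha_k)_{k\in\mathbb{N}}\in\ell^2$ and for $n\in\mathbb{N}$ let $J_n=\sup_{m\ge n}(m+1-n)^{1/2}\big(\sum_{k=m}^\infty|\alpha_k|^2\big)^{1/2}$. Then $$\lim_{n\to\infty}J_n\le\|R_\alpha\|_e\le2\sqrt2\lim_{n\to\infty}J_n.$$ In particular, $R_\alpha$ is compact if and only if $\lim_{n\to\infty}J_n=0$.
   Context: $\mathbb{N}=\{0,1,2,\dots\}$; $\ell^2$ is the space of square-summable functions $\mathbb{N}\to\mathbb{C}$. The Rhaly operator is $(R_\alpha f)(k)=\alpha_k\sum_{j=0}^k f(j)$. The sequence $(J_n)$ is nonincreasing, so its limit exists in $[0,\infty]$. The essential norm is $\|T\|_e=\inf\{\|T-P\|: P \text{ a finite-rank operator on }\ell^2\}$, where $\|\cdot\|$ is the operator norm (possibly $+\infty$). *)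

(* Defs.v *)
From Stdlib Require Import Reals.
From Coquelicot Require Import Coquelicot.
Open Scope R_scope.

Definition seqC := nat -> C.

Definition l2 (f : seqC) : Prop := ex_series (fun k => Cmod (f k) ^ 2).

(* the l^2 norm (meaningful for f in l^2) *)
Definition l2norm (f : seqC) : R := sqrt (Series (fun k => Cmod (f k) ^ 2)).

Definition seq_sub (f g : seqC) : seqC := fun k => Cminus (f k) (g k).
Definition seq_add (f g : seqC) : seqC := fun k => Cplus (f k) (g k).
Definition seq_scal (a : C) (f : seqC) : seqC := fun k => Cmult a (f k).

(* operators are maps on sequences, only considered on inputs from l^2 *)
Definition op := seqC -> seqC.
Definition op_sub (T P : op) : op := fun f => seq_sub (T f) (P f).

Definition op_bounded_by (T : op) (M : R) : Prop :=
  forall f, l2 f -> l2 (T f) /\ l2norm (T f) <= M * l2norm f.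

(* operator norm on l^2, in [0, +oo] (= +oo if T is not a bounded map l^2 -> l^2) *)
Definition opnorm (T : op) : Rbar := Glb_Rbar (fun M => op_bounded_by T M).

Definition op_linear (P : op) : Prop :=
  forall (a : C) f g, l2 f -> l2 g ->
    P (seq_add (seq_scal a f) g) = seq_add (seq_scal a (P f)) (P g).

Definition finite_rank (P : op) : Prop :=
  op_linear P /\ (exists M, op_bounded_by P M) /\
  exists (n : nat) (v : nat -> seqC), (forall i, l2 (v i)) /\
    forall f, l2 f -> exists c : nat -> C,
      P f = (fun k => sum_n (fun i => Cmult (c i) (v i k)) n).

Definition ess_norm (T : op) : Rbar :=
  Rbar_glb (fun x => exists P, finite_rank P /\ x = opnorm (op_sub T P)).

Definition compact_op (T : op) : Prop :=
  (forall f, l2 f -> l2 (T f)) /\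
  forall (u : nat -> seqC) (B : R), (forall j, l2 (u j) /\ l2norm (u j) <= B) ->
    exists (phi : nat -> nat) (g : seqC),
      (forall j, (phi j < phi (S j))%nat) /\ l2 g /\
      is_lim_seq (fun j => l2norm (seq_sub (T (u (phi j))) g)) 0.

Definition rhaly (alpha : seqC) : op :=
  fun f k => Cmult (alpha k) (sum_n f k).

Definition tail2 (alpha : seqC) (m : nat) : R :=
  Series (fun k => Cmod (alpha (m + k)%nat) ^ 2).

Definition J (alpha : seqC) (n : nat) : Rbar :=
  Lub_Rbar (fun x => exists m, (n <= m)%nat /\
    x = sqrt (INR (m + 1 - n)) * sqrt (tail2 alpha m)).

(* lim_n J_n: J is nonincreasing, so its limit is its infimum *)
Definition Jlim (alpha : seqC) : Rbar := Rbar_glb (fun x => exists n, x = J alpha n).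

(* Main.v *)
Require Import Defs.
From Stdlib Require Import Reals.
From Coquelicot Require Import Coquelicot.
From Stdlib Require Import Lra Lia Psatz FunctionalExtensionality Classical IndefiniteDescription.
Open Scope R_scope.
Open Scope R_scope.

Lemma sumS (a : nat -> R) n : @eq R (sum_n a (S n)) (sum_n a n + a (S n)).
Proof. rewrite sum_Sn. reflexivity. Qed.
Lemma sum0 (a : nat -> R) : @eq R (sum_n a 0) (a 0%nat).
Proof. apply sum_O. Qed.

Lemma sum_le (a b : nat -> R) n : (forall k, (k <= n)%nat -> a k <= b k) -> sum_n a n <= sum_n b n.
Proof.
  induction n; intros H. rewrite !sum0; apply H; lia.
  rewrite !sumS. apply Rplus_le_compat. apply IHn; intros; apply H; lia. apply H; lia.
Qed.

Lemma sum_nonneg (a : nat -> R) n : (forall k, (k <= n)%nat -> 0 <= a k) -> 0 <= sum_n a n.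
Proof.
  induction n; intros H. rewrite sum0; apply H; lia.
  rewrite sumS. apply Rplus_le_le_0_compat. apply IHn; intros; apply H; lia. apply H; lia.
Qed.

Lemma sum_plus (a b : nat -> R) n : @eq R (sum_n (fun k => a k + b k) n) (sum_n a n + sum_n b n).
Proof. induction n. rewrite !sum0; reflexivity. rewrite !sumS, IHn; ring. Qed.

Lemma sum_scal (c : R) (a : nat -> R) n : @eq R (sum_n (fun k => c * a k) n) (c * sum_n a n).
Proof. induction n. rewrite !sum0; reflexivity. rewrite !sumS, IHn; ring. Qed.

Lemma sum_ext (a b : nat -> R) n : (forall k, (k <= n)%nat -> a k = b k) -> sum_n a n = sum_n b n.
Proof. intros; apply sum_n_ext_loc; auto. Qed.

Lemma sum_mono (a : nat -> R) n m : (forall k, 0 <= a k) -> (n <= m)%nat -> sum_n a n <= sum_n a m.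
Proof.
  intros H Hnm. induction Hnm. lra. rewrite sumS. specialize (H (S m)). lra.
Qed.

Lemma sum_zero (a : nat -> R) n : (forall k, (k <= n)%nat -> a k = 0) -> sum_n a n = 0.
Proof.
  induction n; intros H. rewrite sum0; apply H; lia.
  rewrite sumS, IHn, H; try lra; try lia. intros; apply H; lia.
Qed.

Lemma sum_swap (c : nat -> nat -> R) N M :
  sum_n (fun k => sum_n (fun i => c i k) M) N = sum_n (fun i => sum_n (fun k => c i k) N) M.
Proof.
  induction N. rewrite sum0. apply sum_ext. intros; rewrite sum0; auto.
  rewrite sumS, IHN, <- sum_plus. apply sum_ext. intros; rewrite sumS; auto.
Qed.

Lemma ps_le_series (s : nat -> R) N : (forall k, 0 <= s k) -> ex_series s -> sum_n s N <= Series s.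
Proof.
  intros Hp He. apply Series_correct in He.
  apply (is_lim_seq_incr_compare (sum_n s)). apply He.
  intros n; rewrite sumS; specialize (Hp (S n)); lra.
Qed.

Lemma ps_bound (s : nat -> R) B : (forall k, 0 <= s k) -> (forall N, sum_n s N <= B) ->
  ex_series s /\ Series s <= B.
Proof.
  intros Hp HB.
  assert (Hinc : forall n, sum_n s n <= sum_n s (S n)) by (intros n; rewrite sumS; specialize (Hp (S n)); lra).
  destruct (ex_finite_lim_seq_incr _ B Hinc HB) as [l Hl].
  assert (He : ex_series s) by (exists l; apply Hl).
  split; auto.
  unfold Series. rewrite (is_lim_seq_unique _ _ Hl).
  assert (Rbar_le l B). { apply (is_lim_seq_le (sum_n s) (fun _ => B) l B); auto. apply is_lim_seq_const. }
  simpl in H; auto.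
Qed.

Open Scope R_scope.

Lemma sqr0 x : 0 <= x * x.
Proof. nra. Qed.

Definition sq (z : C) : R := fst z ^ 2 + snd z ^ 2.

Lemma Cmod_sq z : Cmod z ^ 2 = sq z.
Proof. unfold Cmod, sq. rewrite pow2_sqrt; auto. nra. Qed.

Lemma sq_nonneg z : 0 <= sq z.
Proof. unfold sq; nra. Qed.

Lemma Cmod_sq_nonneg z : 0 <= Cmod z ^ 2.
Proof. rewrite Cmod_sq; apply sq_nonneg. Qed.

Lemma sq_add2 x y : sq (Cplus x y) <= 2 * sq x + 2 * sq y.
Proof. destruct x as [a b], y as [c d]; unfold sq; simpl.
  pose proof (sqr0 (a-c)). pose proof (sqr0 (b-d)). nra. Qed.

Lemma sq_sub2 x y : sq (Cminus x y) <= 2 * sq x + 2 * sq y.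
Proof. destruct x as [a b], y as [c d]; unfold sq, Cminus, Copp, Cplus; simpl.
  pose proof (sqr0 (a+c)). pose proof (sqr0 (b+d)). nra. Qed.

Lemma sq_add_eta x y eta : 0 < eta -> sq (Cplus x y) <= (1 + eta) * sq x + (1 + / eta) * sq y.
Proof.
  intros He. destruct x as [a b], y as [c d]; unfold sq; simpl.
  assert (H1 : forall u v, (u + v) ^ 2 <= (1 + eta) * u ^ 2 + (1 + / eta) * v ^ 2).
  { intros u v. assert (0 <= (eta * u - v) ^ 2 / eta). { apply Rmult_le_pos. apply pow2_ge_0. left; apply Rinv_0_lt_compat; auto. }
    assert ((eta * u - v) ^ 2 / eta = eta * u^2 - 2 * u * v + / eta * v ^ 2) by (field; lra). nra. }
  pose proof (H1 a c); pose proof (H1 b d). simpl in *. lra.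
Qed.

Lemma sq_mult x y : sq (Cmult x y) = sq x * sq y.
Proof. destruct x as [a b], y as [c d]; unfold sq; simpl. ring. Qed.

Lemma sq_sub_sym x y : sq (Cminus x y) = sq (Cminus y x).
Proof. destruct x as [a b], y as [c d]; unfold sq, Cminus, Copp, Cplus; simpl. ring. Qed.

Lemma sq_zero : sq (RtoC 0) = 0.
Proof. unfold sq; simpl; ring. Qed.

Lemma sq_fst_le z : (fst z) ^ 2 <= sq z.
Proof. unfold sq; nra. Qed.
Lemma sq_snd_le z : (snd z) ^ 2 <= sq z.
Proof. unfold sq; nra. Qed.

Lemma fst_sum (f : nat -> C) n : fst (sum_n f n) = sum_n (fun j => fst (f j)) n.
Proof.
  induction n. rewrite sum_O, sum0; auto.
  rewrite sum_Sn, sumS, <- IHn. reflexivity.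
Qed.
Lemma snd_sum (f : nat -> C) n : snd (sum_n f n) = sum_n (fun j => snd (f j)) n.
Proof.
  induction n. rewrite sum_O, sum0; auto.
  rewrite sum_Sn, sumS, <- IHn. reflexivity.
Qed.

Lemma Cmod_sum (f : nat -> C) n : Cmod (sum_n f n) <= sum_n (fun j => Cmod (f j)) n.
Proof.
  induction n. rewrite sum_O, sum0; lra.
  rewrite sum_Sn, sumS. eapply Rle_trans. apply Cmod_triangle. lra.
Qed.

Lemma sq_sum_le (f : nat -> C) n : sq (sum_n f n) <= (sum_n (fun j => Cmod (f j)) n) ^ 2.
Proof.
  rewrite <- Cmod_sq. apply pow_incr. split. apply Cmod_ge_0. apply Cmod_sum.
Qed.

Definition N2 (f : seqC) : R := Series (fun k => Cmod (f k) ^ 2).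

Lemma l2_sq f : l2 f <-> ex_series (fun k => sq (f k)).
Proof.
  unfold l2. split; intros H.
  - apply (ex_series_ext (fun k => Cmod (f k) ^ 2)); auto. intros n; apply Cmod_sq.
  - apply (ex_series_ext (fun k => sq (f k))); auto. intros n; symmetry; apply Cmod_sq.
Qed.

Lemma N2_sq f : N2 f = Series (fun k => sq (f k)).
Proof. unfold N2. apply Series_ext. intros; apply Cmod_sq. Qed.


Lemma ex_series_cmp (a b : nat -> R) : (forall k, 0 <= a k <= b k) -> ex_series b -> ex_series a.
Proof.
  intros H Hb. apply (ex_series_le a b); auto. intros n.
  change (norm (a n)) with (Rabs (a n)). rewrite Rabs_pos_eq; apply H.
Qed.

Lemma Series_nonneg (s : nat -> R) : (forall k, 0 <= s k) -> ex_series s -> 0 <= Series s.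
Proof.
  intros H He. apply Rle_trans with (sum_n s 0). rewrite sum0; auto. apply ps_le_series; auto.
Qed.

Lemma Series_le' (a b : nat -> R) : (forall k, a k <= b k) -> ex_series a -> ex_series b -> Series a <= Series b.
Proof.
  intros H Ha Hb. apply Series_correct in Ha. apply Series_correct in Hb.
  assert (Rbar_le (Series a) (Series b)).
  { apply (is_lim_seq_le (sum_n a) (sum_n b)). intros; apply sum_le; auto. apply Ha. apply Hb. }
  simpl in H0; auto.
Qed.

Lemma ex_series_sum (h : nat -> nat -> R) K : (forall l, ex_series (h l)) ->
  ex_series (fun k => sum_n (fun l => h l k) K).
Proof.
  intros H. induction K.
  - eapply ex_series_ext; [|apply (H 0%nat)]. intros n; simpl; rewrite sum0; auto.
  - eapply ex_series_ext; [|apply (ex_series_plus _ _ IHK (H (S K)))]. intros n; simpl. rewrite sumS. reflexivity.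
Qed.

Lemma Series_sum (h : nat -> nat -> R) K : (forall l, ex_series (h l)) ->
  Series (fun k => sum_n (fun l => h l k) K) = sum_n (fun l => Series (h l)) K.
Proof.
  intros H. induction K.
  - rewrite sum0. apply Series_ext. intros; rewrite sum0; auto.
  - rewrite sumS, <- IHK, <- Series_plus; auto. apply Series_ext. intros; rewrite sumS; auto.
    apply ex_series_sum; auto.
Qed.

Lemma Series_plus' (a b : nat -> R) : ex_series a -> ex_series b -> Series (fun n => a n + b n) = Series a + Series b.
Proof. apply Series_plus. Qed.

Lemma ex_series_plus' (a b : nat -> R) : ex_series a -> ex_series b -> ex_series (fun n => a n + b n).
Proof. intros; apply (ex_series_plus a b); auto. Qed.

Lemma ex_series_scal' (c : R) (a : nat -> R) : ex_series a -> ex_series (fun n => c * a n).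
Proof. intros; apply (ex_series_scal_l c a); auto. Qed.

Lemma Series_zero_terms (s : nat -> R) : (forall k, 0 <= s k) -> ex_series s -> Series s = 0 -> forall k, s k = 0.
Proof.
  intros Hp He H0 k. pose proof (ps_le_series s k Hp He) as H1. pose proof (Hp k).
  destruct k. rewrite sum0 in H1; lra.
  rewrite sumS in H1. assert (0 <= sum_n s k) by (apply sum_nonneg; auto). lra.
Qed.

Lemma l2_cmp f g c : (forall k, sq (f k) <= c * sq (g k)) -> l2 g -> l2 f.
Proof.
  intros H Hg. apply l2_sq. apply l2_sq in Hg.
  apply (ex_series_cmp _ (fun k => c * sq (g k))). intros; split; auto. apply sq_nonneg.
  apply ex_series_scal'; auto.
Qed.

Lemma l2_cmp2 f g h c : (forall k, sq (f k) <= c * sq (g k) + c * sq (h k)) -> l2 g -> l2 h -> l2 f.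
Proof.
  intros H Hg Hh. apply l2_sq. apply l2_sq in Hg. apply l2_sq in Hh.
  apply (ex_series_cmp _ (fun k => c * sq (g k) + c * sq (h k))). intros; split; auto. apply sq_nonneg.
  apply ex_series_plus'; apply ex_series_scal'; auto.
Qed.

Lemma l2_sub f g : l2 f -> l2 g -> l2 (seq_sub f g).
Proof. intros; apply (l2_cmp2 _ f g 2); auto. intros; unfold seq_sub; apply sq_sub2. Qed.

Lemma l2_add f g : l2 f -> l2 g -> l2 (seq_add f g).
Proof. intros; apply (l2_cmp2 _ f g 2); auto. intros; unfold seq_add; apply sq_add2. Qed.

Lemma zero_series : ex_series (fun _ => 0) /\ Series (fun _ => 0) = 0.
Proof.
  destruct (ps_bound (fun _ => 0) 0) as [H1 H2]. intros; lra. intros; rewrite sum_zero; auto; lra.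
  split; auto. pose proof (Series_nonneg (fun _ => 0)). assert (0 <= Series (fun _ : nat => 0)) by (apply H; [intros; lra | exact H1]). lra.
Qed.

Lemma l2_zero : l2 (fun _ => RtoC 0).
Proof. apply l2_sq. apply (ex_series_ext (fun _ => 0)). intros; rewrite sq_zero; auto.
  apply zero_series. Qed.

Lemma N2_nonneg f : l2 f -> 0 <= N2 f.
Proof. intros H. rewrite N2_sq. apply Series_nonneg. intros; apply sq_nonneg. apply l2_sq; auto. Qed.

Lemma N2_le f g c : (forall k, sq (f k) <= c * sq (g k)) -> l2 g -> N2 f <= c * N2 g.
Proof.
  intros H Hg. assert (l2 f) by (apply (l2_cmp f g c); auto).
  rewrite !N2_sq, <- Series_scal_l. apply Series_le'; auto. apply l2_sq; auto.
  apply ex_series_scal'; apply l2_sq; auto.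
Qed.

Lemma N2_le2 f g h c1 c2 : (forall k, sq (f k) <= c1 * sq (g k) + c2 * sq (h k)) -> l2 f -> l2 g -> l2 h ->
  N2 f <= c1 * N2 g + c2 * N2 h.
Proof.
  intros H Hf Hg Hh. apply l2_sq in Hf; apply l2_sq in Hg; apply l2_sq in Hh.
  rewrite !N2_sq, <- !Series_scal_l, <- Series_plus'. apply Series_le'; auto.
  apply ex_series_plus'; apply ex_series_scal'; auto.
  apply ex_series_scal'; auto. apply ex_series_scal'; auto.
Qed.

Lemma l2norm_N2 f : l2norm f = sqrt (N2 f).
Proof. reflexivity. Qed.

Lemma sum_le_N2 f K : l2 f -> sum_n (fun k => sq (f k)) K <= N2 f.
Proof. intros H. rewrite N2_sq. apply ps_le_series. intros; apply sq_nonneg. apply l2_sq; auto. Qed.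

Lemma l2_bound f B : (forall k, 0 <= f k) -> (forall K, sum_n f K <= B) -> ex_series f /\ Series f <= B.
Proof. apply ps_bound. Qed.
Open Scope R_scope.

Lemma le_of_sq (y X : R) : 0 <= X -> y * y <= X * X -> y <= X.
Proof. intros H1 H2. destruct (Rle_dec y X); auto. assert (X < y) by lra. nra. Qed.

Lemma cs_weighted (a mu : nat -> R) k : (forall i, 0 < mu i) ->
  (sum_n a k) ^ 2 <= sum_n (fun i => / mu i) k * sum_n (fun i => a i ^ 2 * mu i) k.
Proof.
  intros Hmu. induction k.
  - rewrite !sum0. specialize (Hmu 0%nat). right; field; lra.
  - rewrite !sumS. set (A := sum_n a k) in *. set (L := sum_n (fun i => / mu i) k) in *.
    set (Q := sum_n (fun i => a i ^ 2 * mu i) k) in *.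
    assert (HL : 0 <= L) by (apply sum_nonneg; intros; left; apply Rinv_0_lt_compat; auto).
    assert (HQ : 0 <= Q) by (apply sum_nonneg; intros; apply Rmult_le_pos; [apply pow2_ge_0| left; auto]).
    set (m := mu (S k)) in *. set (x := a (S k)) in *. assert (Hm : 0 < m) by apply Hmu.
    assert (Hi : / m * m = 1) by (field; lra).
    assert (H2 : 2 * A * x <= L * (x ^ 2 * m) + / m * Q).
    { apply le_of_sq.
      - apply Rplus_le_le_0_compat; apply Rmult_le_pos; auto. apply Rmult_le_pos; [apply pow2_ge_0|lra].
        left; apply Rinv_0_lt_compat; auto.
      - assert ((L * (x ^ 2 * m) + / m * Q) * (L * (x ^ 2 * m) + / m * Q) =
                (L * (x ^ 2 * m) - / m * Q) * (L * (x ^ 2 * m) - / m * Q) + 4 * (L * Q) * (x * x)).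
        { simpl. field. lra. }
        rewrite H. pose proof (sqr0 (L * (x ^ 2 * m) - / m * Q)).
        assert (A ^ 2 * (x * x) <= L * Q * (x * x)) by (apply Rmult_le_compat_r; [apply sqr0|auto]).
        simpl in *. nra. }
    assert (L * (x ^ 2 * m) + / m * Q + / m * (x ^ 2 * m) = L * (x ^ 2 * m) + / m * Q + x ^ 2).
    { field; lra. }
    simpl in *. nra.
Qed.

Definition sr (k : nat) : R := sqrt (INR (S k)).

Lemma sr_pos k : 0 < sr k.
Proof. unfold sr. apply sqrt_lt_R0. apply lt_0_INR; lia. Qed.

Lemma sr_sq k : sr k * sr k = INR (S k).
Proof. unfold sr. apply sqrt_sqrt. apply pos_INR. Qed.

Lemma sr_mono k : sr k <= sr (S k).
Proof. unfold sr. apply sqrt_le_1_alt. apply le_INR; lia. Qed.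

Lemma sum_inv_sr k : sum_n (fun i => / sr i) k <= 2 * sr k.
Proof.
  induction k.
  - rewrite sum0. unfold sr; simpl. rewrite sqrt_1. lra.
  - rewrite sumS. pose proof (sr_sq k); pose proof (sr_sq (S k)). pose proof (sr_pos k); pose proof (sr_pos (S k)).
    rewrite S_INR in H0. set (x := sr k) in *; set (y := sr (S k)) in *.
    assert (/ y <= 2 * y - 2 * x).
    { apply Rmult_le_reg_r with y; auto. rewrite Rinv_l; try lra.
      pose proof (sqr0 (x - y)). nra. }
    lra.
Qed.

Section Hardy.
Variable w : nat -> R.
Hypothesis w_pos : forall k, 0 <= w k.
Hypothesis w_ex : ex_series w.
Definition Wt (m : nat) : R := Series (fun k => w (m + k)%nat).

Lemma Wt_ex m : ex_series (fun k => w (m + k)%nat).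
Proof. apply (ex_series_incr_n w m). auto. Qed.

Lemma Wt_pos m : 0 <= Wt m.
Proof. apply Series_nonneg; auto. apply Wt_ex. Qed.

Lemma Wt_rec m : Wt m = w m + Wt (S m).
Proof.
  unfold Wt. rewrite Series_incr_1 by apply Wt_ex. rewrite Nat.add_0_r. f_equal.
  apply Series_ext; intros; f_equal; lia.
Qed.

Variable B : R.
Hypothesis HB : forall m, INR (S m) * Wt m <= B.

Lemma B_pos : 0 <= B.
Proof. specialize (HB 0%nat). pose proof (Wt_pos 0). simpl in HB. lra. Qed.

Lemma Wt_bound m : Wt m <= B / (sr m * sr m).
Proof. rewrite sr_sq. pose proof (HB m). assert (0 < INR (S m)) by (apply lt_0_INR; lia).
  apply Rmult_le_reg_l with (INR (S m)); auto. field_simplify; lra. Qed.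

Definition Tsum (i K : nat) : R := sum_n (fun k => if (i <=? k)%nat then w k * sr k else 0) K.

Lemma Tsum_below i K : (K < i)%nat -> Tsum i K = 0.
Proof. intros H. unfold Tsum. apply sum_zero. intros k Hk. destruct (Nat.leb_spec i k); lia || lra. Qed.

Lemma Tsum_step i K : Tsum i (S K) = Tsum i K + (if (i <=? S K)%nat then w (S K) * sr (S K) else 0).
Proof. unfold Tsum. rewrite sumS. reflexivity. Qed.

Lemma Tsum_at i : Tsum i i = w i * sr i.
Proof.
  destruct i. unfold Tsum. rewrite sum0. simpl. auto.
  rewrite Tsum_step, Tsum_below by lia. rewrite Nat.leb_refl. ring.
Qed.

Lemma Tsum_aux i d : Tsum i (i + d) + Wt (S (i + d)) * sr (i + d) <= Wt i * sr i + B * (/ sr i - / sr (i + d)).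
Proof.
  induction d.
  - rewrite Nat.add_0_r, Tsum_at. rewrite (Wt_rec i). rewrite Rminus_diag, Rmult_0_r. lra.
  - replace (i + S d)%nat with (S (i + d)) by lia. rewrite Tsum_step.
    replace ((i <=? S (i + d))%nat) with true by (symmetry; apply Nat.leb_le; lia).
    set (K := (i + d)%nat) in *.
    pose proof (Wt_rec (S K)) as HW.
    pose proof (sr_pos K); pose proof (sr_pos (S K)); pose proof (sr_mono K).
    pose proof (Wt_bound (S K)). pose proof B_pos.
    assert (Wt (S K) * (sr (S K) - sr K) <= B * (/ sr K - / sr (S K))).
    { assert (E : / sr K - / sr (S K) = (sr (S K) - sr K) * / (sr K * sr (S K))) by (field; lra).
      rewrite E.
      apply Rle_trans with (B / (sr (S K) * sr (S K)) * (sr (S K) - sr K)).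
      apply Rmult_le_compat_r; lra.
      unfold Rdiv. rewrite (Rmult_comm (sr (S K) - sr K)), <- Rmult_assoc.
      apply Rmult_le_compat_r; try lra. apply Rmult_le_compat_l; auto.
      apply Rinv_le_contravar. nra. apply Rmult_le_compat_r; lra. }
    assert (Tsum i K + w (S K) * sr (S K) + Wt (S (S K)) * sr (S K) = Tsum i K + Wt (S K) * sr K + Wt (S K) * (sr (S K) - sr K)).
    { rewrite HW. ring. }
    lra.
Qed.

Lemma Tsum_bound i K : Tsum i K <= 2 * B / sr i.
Proof.
  destruct (Nat.lt_ge_cases K i).
  - rewrite Tsum_below by auto. pose proof B_pos; pose proof (sr_pos i).
    apply Rmult_le_pos; [lra| left; apply Rinv_0_lt_compat; auto].
  - replace K with (i + (K - i))%nat by lia. pose proof (Tsum_aux i (K - i)).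
    pose proof (Wt_pos (S (i + (K - i)))). pose proof (sr_pos (i + (K - i))). pose proof (sr_pos i).
    pose proof (Wt_bound i). pose proof B_pos.
    assert (Wt i * sr i <= B / sr i).
    { apply Rle_trans with (B / (sr i * sr i) * sr i). apply Rmult_le_compat_r; lra. right; field; lra. }
    assert (0 < / sr (i + (K - i))) by (apply Rinv_0_lt_compat; auto).
    assert (0 <= Wt (S (i + (K - i))) * sr (i + (K - i))) by (apply Rmult_le_pos; lra).
    unfold Rdiv in *. nra.
Qed.

Lemma sum_extend (c : nat -> R) k K : (k <= K)%nat ->
  @eq R (sum_n c k) (sum_n (fun i => if (i <=? k)%nat then c i else 0) K).
Proof.
  intros H. induction H.
  - apply sum_ext. intros i Hi. destruct (Nat.leb_spec i k); auto; lia.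
  - rewrite sumS, <- IHle. destruct (Nat.leb_spec (S m) k); try lia. simpl. rewrite Rplus_0_r. reflexivity.
Qed.

Lemma hardy (a : nat -> R) : (forall k, 0 <= a k) ->
  forall K, sum_n (fun k => w k * (sum_n a k) ^ 2) K <= 4 * B * sum_n (fun i => a i ^ 2) K.
Proof.
  intros Ha K.
  apply Rle_trans with (sum_n (fun k => w k * (2 * sr k * sum_n (fun i => a i ^ 2 * sr i) k)) K).
  { apply sum_le. intros k _. apply Rmult_le_compat_l; auto.
    eapply Rle_trans. apply (cs_weighted a sr k). apply sr_pos.
    apply Rmult_le_compat_r. apply sum_nonneg; intros; apply Rmult_le_pos; [apply pow2_ge_0|left; apply sr_pos].
    apply sum_inv_sr. }
  apply Rle_trans with (sum_n (fun k => sum_n (fun i => (if (i <=? k)%nat then w k * sr k else 0) * (2 * (a i ^ 2 * sr i))) K) K).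
  { right. apply sum_ext. intros k Hk. rewrite (sum_extend _ k K Hk).
    rewrite <- !sum_scal. apply sum_ext. intros i _. destruct (Nat.leb_spec i k); ring. }
  rewrite sum_swap.
  apply Rle_trans with (sum_n (fun i => 2 * (a i ^ 2 * sr i) * Tsum i K) K).
  { right. apply sum_ext. intros i _. unfold Tsum. rewrite <- sum_scal. apply sum_ext; intros j _; destruct (i <=? j)%nat; simpl; ring. }
  rewrite <- (sum_scal (4 * B)). apply sum_le. intros i _.
  pose proof (Tsum_bound i K). pose proof (sr_pos i).
  assert (0 <= 2 * (a i ^ 2 * sr i)) by (pose proof (pow2_ge_0 (a i)); nra).
  apply Rle_trans with (2 * (a i ^ 2 * sr i) * (2 * B / sr i)). apply Rmult_le_compat_l; auto.
  right; field; lra.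
Qed.
End Hardy.
Open Scope R_scope.

Lemma C_ext (z w : C) : fst z = fst w -> snd z = snd w -> z = w.
Proof. destruct z, w; simpl; intros; subst; auto. Qed.

Lemma sum_shift (g : nat -> R) n i : (forall j, (j < n)%nat -> g j = 0) ->
  @eq R (sum_n g (n + i)) (sum_n (fun i' => g (n + i')%nat) i).
Proof.
  intros H. induction i.
  - rewrite sum0, Nat.add_0_r. destruct n. rewrite sum0; auto.
    rewrite sumS, sum_zero. lra. intros; apply H; lia.
  - replace (n + S i)%nat with (S (n + i)) by lia. rewrite !sumS, IHi. do 2 f_equal. lia.
Qed.

Lemma sum_shift_le (g : nat -> R) n i : (forall j, 0 <= g j) ->
  sum_n (fun i' => g (n + i')%nat) i <= sum_n g (n + i).
Proof.
  intros H.
  assert (E := sum_shift (fun j => if (j <? n)%nat then 0 else g j) n i).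
  rewrite (sum_ext _ (fun i' => if (n + i' <? n)%nat then 0 else g (n + i')%nat)).
  rewrite <- E. apply sum_le. intros. destruct (Nat.ltb_spec k n); auto; lra.
  intros. destruct (Nat.ltb_spec j n); auto; lia.
  intros. destruct (Nat.ltb_spec (n + k) n); auto; lia.
Qed.

Lemma sumC_shift (g : nat -> C) n i : (forall j, (j < n)%nat -> g j = RtoC 0) ->
  sum_n g (n + i) = sum_n (fun i' => g (n + i')%nat) i.
Proof.
  intros H. apply C_ext; rewrite ?fst_sum, ?snd_sum; apply sum_shift; intros; rewrite H; auto.
Qed.

Lemma sumC_zero (g : nat -> C) k : (forall j, (j <= k)%nat -> g j = RtoC 0) -> sum_n g k = RtoC 0.
Proof.
  intros H. apply C_ext; rewrite ?fst_sum, ?snd_sum; simpl; apply sum_zero; intros; rewrite H; auto.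
Qed.

Lemma sum_pm (a b : nat -> R) k : @eq R (sum_n (fun j => a j + - b j) k) (sum_n a k + - sum_n b k).
Proof. induction k. rewrite !sum0; auto. rewrite !sumS, IHk. ring. Qed.

Lemma sumC_minus (f g : nat -> C) k : sum_n (fun j => Cminus (f j) (g j)) k = Cminus (sum_n f k) (sum_n g k).
Proof.
  apply C_ext.
  - transitivity (fst (sum_n f k) + - fst (sum_n g k)); [|reflexivity].
    rewrite !fst_sum, <- sum_pm; apply sum_ext; intros; simpl; ring.
  - transitivity (snd (sum_n f k) + - snd (sum_n g k)); [|reflexivity].
    rewrite !snd_sum, <- sum_pm; apply sum_ext; intros; simpl; ring.
Qed.

Lemma sum_L k : forall (p q r : nat -> R) c1 c2, @eq R (sum_n (fun j => c1 * p j - c2 * q j + r j) k)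
     (c1 * sum_n p k - c2 * sum_n q k + sum_n r k).
Proof. intros. induction k. rewrite !sum0; reflexivity. rewrite !sumS, IHk. ring. Qed.
Lemma sum_L2 k : forall (p q r : nat -> R) c1 c2, @eq R (sum_n (fun j => c1 * p j + c2 * q j + r j) k)
     (c1 * sum_n p k + c2 * sum_n q k + sum_n r k).
Proof. intros. induction k. rewrite !sum0; reflexivity. rewrite !sumS, IHk. ring. Qed.

Lemma sumC_add_scal (a : C) (f g : nat -> C) k :
  sum_n (fun j => Cplus (Cmult a (f j)) (g j)) k = Cplus (Cmult a (sum_n f k)) (sum_n g k).
Proof.
  pose proof (sum_L k) as L. pose proof (sum_L2 k) as L2.
  apply C_ext.
  - transitivity (fst a * fst (sum_n f k) - snd a * snd (sum_n f k) + fst (sum_n g k)); [|reflexivity].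
    rewrite !fst_sum, !snd_sum, <- L. apply sum_ext; intros; reflexivity.
  - transitivity (fst a * snd (sum_n f k) + snd a * fst (sum_n f k) + snd (sum_n g k)); [|reflexivity].
    rewrite !fst_sum, !snd_sum, <- L2. apply sum_ext; intros; reflexivity.
Qed.

Section Rh.
Variable alpha : seqC.
Hypothesis Ha : l2 alpha.

Definition trunc (n : nat) (f : seqC) : seqC := fun j => if (j <? n)%nat then f j else RtoC 0.
Definition Pn (n : nat) : op := fun f => rhaly alpha (trunc n f).
Definition Dn (n : nat) : op := op_sub (rhaly alpha) (Pn n).

Lemma Dn_eq n f k : Dn n f k = Cmult (alpha k) (sum_n (fun j => if (j <? n)%nat then RtoC 0 else f j) k).
Proof.
  unfold Dn, op_sub, seq_sub, Pn, rhaly.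
  replace (sum_n (fun j => if (j <? n)%nat then RtoC 0 else f j) k) with (Cminus (sum_n f k) (sum_n (trunc n f) k)).
  - destruct (alpha k), (sum_n f k), (sum_n (trunc n f) k). apply C_ext; simpl; ring.
  - rewrite <- sumC_minus. apply sum_n_ext. intros j. unfold trunc. destruct (j <? n)%nat.
    apply C_ext; simpl; ring. apply C_ext; simpl; ring.
Qed.

Lemma Dn_low n f k : (k < n)%nat -> Dn n f k = RtoC 0.
Proof.
  intros H. rewrite Dn_eq, sumC_zero. apply C_ext; simpl; ring.
  intros j Hj. destruct (Nat.ltb_spec j n); auto; lia.
Qed.

Lemma Dn_high n f i : Dn n f (n + i)%nat = Cmult (alpha (n + i)%nat) (sum_n (fun i' => f (n + i')%nat) i).
Proof.
  rewrite Dn_eq, sumC_shift. f_equal. apply sum_n_ext. intros. destruct (Nat.ltb_spec (n + n0) n); auto; lia.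
  intros. destruct (Nat.ltb_spec j n); auto; lia.
Qed.

Lemma Dn_bound n Bv : (forall m, (n <= m)%nat -> INR (m + 1 - n) * tail2 alpha m <= Bv) ->
  forall f, l2 f -> l2 (Dn n f) /\ N2 (Dn n f) <= 4 * Bv * N2 f.
Proof.
  intros HB f Hf.
  set (w := fun i => sq (alpha (n + i)%nat)).
  assert (Hw : forall k, 0 <= w k) by (intros; apply sq_nonneg).
  assert (Hwe : ex_series w).
  { apply l2_sq in Ha. apply (ex_series_incr_n _ n) in Ha. auto. }
  assert (HBw : forall m, INR (S m) * Wt w m <= Bv).
  { intros m. specialize (HB (n + m)%nat ltac:(lia)). replace (n + m + 1 - n)%nat with (S m) in HB by lia.
    unfold tail2 in HB. unfold Wt, w. replace (Series (fun k => sq (alpha (n + (m + k))%nat))) with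
      (Series (fun k => Cmod (alpha (n + m + k)%nat) ^ 2)); auto.
    apply Series_ext; intros. rewrite Cmod_sq. f_equal. f_equal. lia. }
  set (a := fun i => Cmod (f (n + i)%nat)).
  assert (Hpart : forall K, sum_n (fun k => sq (Dn n f k)) K <= 4 * Bv * N2 f).
  { intros K. apply Rle_trans with (sum_n (fun k => sq (Dn n f k)) (n + K)).
    apply sum_mono. intros; apply sq_nonneg. lia.
    rewrite sum_shift. 2:{ intros j Hj; rewrite Dn_low; auto; apply sq_zero. }
    apply Rle_trans with (sum_n (fun k => w k * (sum_n a k) ^ 2) K).
    { apply sum_le. intros i _. rewrite Dn_high, sq_mult. apply Rmult_le_compat_l. apply sq_nonneg.
      apply sq_sum_le. }
    eapply Rle_trans. apply hardy; auto. intros; apply Cmod_ge_0.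
    apply Rmult_le_compat_l. pose proof (B_pos w Hw Hwe Bv HBw). lra.
    apply Rle_trans with (sum_n (fun j => sq (f j)) (n + K)).
    eapply Rle_trans. 2: apply (sum_shift_le (fun j => sq (f j))). right; apply sum_ext; intros; unfold a; apply Cmod_sq.
    intros; apply sq_nonneg.
    apply sum_le_N2; auto. }
  destruct (ps_bound (fun k => sq (Dn n f k)) (4 * Bv * N2 f)) as [H1 H2]; auto. intros; apply sq_nonneg.
  split. apply l2_sq; auto. rewrite N2_sq; auto.
Qed.

Lemma trunc_sum_le n f k : sum_n (fun j => Cmod (trunc n f j)) k <= sum_n (fun j => Cmod (f j)) n.
Proof.
  induction k.
  - rewrite sum0. unfold trunc. destruct (Nat.ltb_spec 0 n).
    + apply Rle_trans with (sum_n (fun j => Cmod (f j)) 0). rewrite sum0; lra. apply sum_mono. intros; apply Cmod_ge_0. lia.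
    + rewrite Cmod_0. apply sum_nonneg; intros; apply Cmod_ge_0.
  - rewrite sumS. unfold trunc at 2. destruct (Nat.ltb_spec (S k) n).
    + apply Rle_trans with (sum_n (fun j => Cmod (f j)) (S k)).
      rewrite sumS. apply Rplus_le_compat_r. apply sum_le. intros. unfold trunc. destruct (k0 <? n)%nat. lra. rewrite Cmod_0; apply Cmod_ge_0.
      apply sum_mono. intros; apply Cmod_ge_0. lia.
    + rewrite Cmod_0. lra.
Qed.

Lemma cs_count (a : nat -> R) n : (sum_n a n) ^ 2 <= INR (S n) * sum_n (fun i => a i ^ 2) n.
Proof.
  eapply Rle_trans. apply (cs_weighted a (fun _ => 1)). intros; lra.
  replace (sum_n (fun _ : nat => / 1) n) with (INR (S n)).
  right; f_equal. apply sum_ext; intros; ring.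
  induction n. rewrite sum0; simpl; field. rewrite sumS, <- IHn, Rinv_1, S_INR. auto.
Qed.

Lemma Pn_bound n f : l2 (Pn n f) /\ N2 (Pn n f) <= N2 alpha * (INR (S n) * sum_n (fun j => sq (f j)) n).
Proof.
  set (c := INR (S n) * sum_n (fun j => sq (f j)) n).
  assert (H : forall k, sq (Pn n f k) <= c * sq (alpha k)).
  { intros k. unfold Pn, rhaly. rewrite sq_mult, (Rmult_comm c). apply Rmult_le_compat_l. apply sq_nonneg.
    eapply Rle_trans. apply sq_sum_le. eapply Rle_trans. apply pow_incr. split.
    apply sum_nonneg; intros; apply Cmod_ge_0. apply trunc_sum_le.
    eapply Rle_trans. apply cs_count. right. unfold c. f_equal. apply sum_ext; intros; apply Cmod_sq. }
  split. apply (l2_cmp _ alpha c); auto.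
  rewrite Rmult_comm. apply N2_le; auto.
Qed.
End Rh.
Open Scope R_scope.

Lemma glb_spec (E : Rbar -> Prop) : Rbar_is_glb E (Rbar_glb E).
Proof. unfold Rbar_glb. destruct (Rbar_ex_glb E); auto. Qed.

Lemma opnorm_le T M : op_bounded_by T M -> Rbar_le (opnorm T) (Finite M).
Proof. intros H. unfold opnorm. destruct (Glb_Rbar_correct (fun M => op_bounded_by T M)) as [H1 _]. apply H1; auto. Qed.

Lemma ess_le T P : finite_rank P -> Rbar_le (ess_norm T) (opnorm (op_sub T P)).
Proof. intros H. unfold ess_norm. destruct (glb_spec (fun x => exists P, finite_rank P /\ x = opnorm (op_sub T P))) as [H1 _].
  apply H1. exists P; auto. Qed.

Lemma sum_single (t : nat -> R) N p : (p <= N)%nat -> (forall i, (i <= N)%nat -> i <> p -> t i = 0) -> @eq R (sum_n t N) (t p).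
Proof.
  intros Hp H. induction N.
  - assert (p = 0%nat) by lia. subst. rewrite sum0; auto.
  - destruct (Nat.eq_dec p (S N)).
    + subst. rewrite sumS, sum_zero. ring. intros; apply H; lia.
    + rewrite sumS, IHN, (H (S N)); try lia. ring. intros; apply H; lia.
Qed.

Lemma sumC_single (t : nat -> C) N p : (p <= N)%nat -> (forall i, (i <= N)%nat -> i <> p -> t i = RtoC 0) -> sum_n t N = t p.
Proof.
  intros Hp H. apply C_ext; rewrite ?fst_sum, ?snd_sum; apply (sum_single (fun j => _ (t j))); auto;
  intros; rewrite H; auto.
Qed.

Lemma sqrt_prod_le a b x : 0 <= a -> 0 <= b -> sqrt a * sqrt b <= x -> a * b <= x ^ 2.
Proof.
  intros Ha Hb H. rewrite <- (sqrt_sqrt a Ha), <- (sqrt_sqrt b Hb) at 1.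
  assert (0 <= sqrt a * sqrt b) by (apply Rmult_le_pos; apply sqrt_pos).
  simpl. nra.
Qed.

Section Up.
Variable alpha : seqC.
Hypothesis Ha : l2 alpha.

Lemma tail2_nonneg m : 0 <= tail2 alpha m.
Proof.
  unfold tail2. apply Series_nonneg. intros; apply Cmod_sq_nonneg.
  apply (ex_series_incr_n (fun k => Cmod (alpha k) ^ 2) m). apply Ha.
Qed.

Lemma J_ge n m : (n <= m)%nat -> Rbar_le (Finite (sqrt (INR (m + 1 - n)) * sqrt (tail2 alpha m))) (J alpha n).
Proof.
  intros H. unfold J. destruct (Lub_Rbar_correct (fun x => exists m, (n <= m)%nat /\ x = sqrt (INR (m + 1 - n)) * sqrt (tail2 alpha m))) as [H1 _].
  apply H1. exists m; auto.
Qed.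

Lemma J_nonneg n : Rbar_le (Finite 0) (J alpha n).
Proof.
  eapply Rbar_le_trans. 2: apply (J_ge n n); auto. simpl. apply Rmult_le_pos; apply sqrt_pos.
Qed.

Lemma J_fin n x : J alpha n = Finite x -> forall m, (n <= m)%nat -> INR (m + 1 - n) * tail2 alpha m <= x ^ 2.
Proof.
  intros H m Hm. pose proof (J_ge n m Hm). rewrite H in H0. simpl in H0.
  apply sqrt_prod_le; auto. apply pos_INR. apply tail2_nonneg.
Qed.

Lemma J_le n (x : R) : (forall m, (n <= m)%nat -> sqrt (INR (m + 1 - n)) * sqrt (tail2 alpha m) <= x) -> Rbar_le (J alpha n) (Finite x).
Proof.
  intros H. unfold J. destruct (Lub_Rbar_correct (fun x => exists m, (n <= m)%nat /\ x = sqrt (INR (m + 1 - n)) * sqrt (tail2 alpha m))) as [_ H2].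
  apply H2. intros y [m [Hm ->]]. simpl; auto.
Qed.

Lemma Jlim_le n : Rbar_le (Jlim alpha) (J alpha n).
Proof. unfold Jlim. destruct (glb_spec (fun x => exists n, x = J alpha n)) as [H1 _]. apply H1. exists n; auto. Qed.

Lemma Jlim_nonneg : Rbar_le (Finite 0) (Jlim alpha).
Proof. unfold Jlim. destruct (glb_spec (fun x => exists n, x = J alpha n)) as [_ H2]. apply H2.
  intros x [n ->]. apply J_nonneg. Qed.

Lemma Jlim_lb (x : Rbar) : (forall n, Rbar_le x (J alpha n)) -> Rbar_le x (Jlim alpha).
Proof. intros H. unfold Jlim. destruct (glb_spec (fun x => exists n, x = J alpha n)) as [_ H2]. apply H2.
  intros y [n ->]. auto. Qed.

Lemma Pn_linear n : op_linear (Pn alpha n).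
Proof.
  intros a f g _ _. apply functional_extensionality. intros k. unfold Pn, rhaly, seq_add, seq_scal.
  rewrite (sum_n_ext (trunc n (fun k0 => Cplus (Cmult a (f k0)) (g k0))) (fun j => Cplus (Cmult a (trunc n f j)) (trunc n g j))).
  rewrite sumC_add_scal. destruct (alpha k), a, (sum_n (trunc n f) k), (sum_n (trunc n g) k). apply C_ext; simpl; ring.
  intros j. unfold trunc. destruct (j <? n)%nat; auto. apply C_ext; simpl; ring.
Qed.

Lemma Pn_bounded n : exists M, op_bounded_by (Pn alpha n) M.
Proof.
  exists (sqrt (N2 alpha * INR (S n))). intros f Hf. destruct (Pn_bound alpha Ha n f) as [H1 H2]. split; auto.
  unfold l2norm. fold (N2 (Pn alpha n f)). fold (N2 f). rewrite <- sqrt_mult.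
  apply sqrt_le_1_alt. rewrite Rmult_assoc. eapply Rle_trans. apply H2. apply Rmult_le_compat_l. apply N2_nonneg; auto.
  apply Rmult_le_compat_l. apply pos_INR. apply sum_le_N2; auto.
  apply Rmult_le_pos. apply N2_nonneg; auto. apply pos_INR. apply N2_nonneg; auto.
Qed.

Lemma trunc_sum_stable n f k : (n <= k)%nat -> sum_n (trunc n f) k = sum_n (trunc n f) n.
Proof.
  intros H. induction H; auto. rewrite sum_Sn, IHle. unfold trunc at 2. destruct (Nat.ltb_spec (S m) n); try lia.
  apply C_ext; simpl; ring.
Qed.

Lemma Pn_finite_rank n : finite_rank (Pn alpha n).
Proof.
  split; [apply Pn_linear|split; [apply Pn_bounded|]].
  exists n, (fun i k => if (i <? n)%nat then (if (k =? i)%nat then alpha k else RtoC 0) else (if (k <? n)%nat then RtoC 0 else alpha k)).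
  split.
  - intros i. apply (l2_cmp _ alpha 1); auto. intros k. destruct (i <? n)%nat; [destruct (k =? i)%nat| destruct (k <? n)%nat];
      rewrite ?sq_zero; try lra; pose proof (sq_nonneg (alpha k)); lra.
  - intros f Hf. exists (fun i => sum_n (trunc n f) i). apply functional_extensionality. intros k. unfold Pn, rhaly.
    destruct (Nat.lt_ge_cases k n).
    + rewrite (sumC_single _ n k); try lia.
      * rewrite Nat.eqb_refl. destruct (Nat.ltb_spec k n); try lia. apply C_ext; simpl; ring.
      * intros i Hi Hik. destruct (Nat.ltb_spec i n). destruct (Nat.eqb_spec k i); try lia. apply C_ext; simpl; ring.
        destruct (Nat.ltb_spec k n); try lia. apply C_ext; simpl; ring.
    + rewrite (sumC_single _ n n); try lia.
      * rewrite Nat.ltb_irrefl. destruct (Nat.ltb_spec k n); try lia. rewrite trunc_sum_stable; auto. apply C_ext; simpl; ring.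
      * intros i Hi Hik. destruct (Nat.ltb_spec i n); try lia. destruct (Nat.eqb_spec k i); try lia. apply C_ext; simpl; ring.
Qed.

Lemma ess_le_J n x : J alpha n = Finite x -> Rbar_le (ess_norm (rhaly alpha)) (Finite (2 * x)).
Proof.
  intros HJ. eapply Rbar_le_trans. apply (ess_le _ (Pn alpha n)). apply Pn_finite_rank.
  apply opnorm_le. intros f Hf.
  assert (Hx : 0 <= x). { pose proof (J_nonneg n). rewrite HJ in H. auto. }
  destruct (Dn_bound alpha Ha n (x ^ 2) (J_fin n x HJ) f Hf) as [H1 H2]. split; auto.
  unfold l2norm. fold (N2 (op_sub (rhaly alpha) (Pn alpha n) f)). fold (N2 f).
  replace (2 * x) with (sqrt (4 * x ^ 2)). rewrite <- sqrt_mult. apply sqrt_le_1_alt. apply H2.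
  nra. apply N2_nonneg; auto.
  replace (4 * x ^ 2) with ((2 * x) ^ 2) by ring. apply sqrt_pow2. lra.
Qed.

Lemma upper_bound : Rbar_le (ess_norm (rhaly alpha)) (Rbar_mult (Finite (2 * sqrt 2)) (Jlim alpha)).
Proof.
  assert (Hs : 1 <= sqrt 2). { rewrite <- sqrt_1. apply sqrt_le_1_alt. lra. }
  pose proof Jlim_nonneg as H0.
  destruct (Jlim alpha) as [L| |] eqn:EL; try (simpl in H0; contradiction).
  - simpl in H0. simpl.
    assert (Heps : forall eps, 0 < eps -> Rbar_le (ess_norm (rhaly alpha)) (Finite (2 * (L + eps)))).
    { intros eps He. destruct (classic (exists n, Rbar_lt (J alpha n) (Finite (L + eps)))) as [[n Hn]|Hno].
      - pose proof (J_nonneg n). destruct (J alpha n) as [x| |] eqn:Ex; simpl in Hn, H; try contradiction.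
        eapply Rbar_le_trans. apply (ess_le_J n x Ex). simpl; lra.
      - exfalso. assert (Rbar_le (Finite (L + eps)) (Jlim alpha)).
        { apply Jlim_lb. intros n. destruct (Rbar_le_dec (Finite (L + eps)) (J alpha n)); auto.
          exfalso; apply Hno. exists n. apply Rbar_not_le_lt; auto. }
        rewrite EL in H. simpl in H. lra. }
    destruct (ess_norm (rhaly alpha)) as [e| |] eqn:Ee.
    + simpl. assert (e <= 2 * L).
      { destruct (Rle_dec e (2 * L)); auto. exfalso. specialize (Heps ((e - 2 * L) / 4) ltac:(lra)). simpl in Heps. lra. }
      assert (2 * L <= 2 * sqrt 2 * L) by nra. lra.
    + specialize (Heps 1 ltac:(lra)). simpl in Heps. contradiction.
    + simpl; auto.
  - simpl. destruct (Rle_dec 0 (2 * sqrt 2)); [|lra]. destruct (Rle_lt_or_eq_dec 0 (2 * sqrt 2) r); [|lra].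
    destruct (ess_norm (rhaly alpha)); simpl; auto.
Qed.
End Up.
Open Scope R_scope.

Definition cnt (n m K : nat) : nat := (S (Nat.min K m) - n)%nat.
Definition inb (n m j : nat) : bool := (n <=? j)%nat && (j <=? m)%nat.

Lemma count_sum n m (x : R) K : @eq R (sum_n (fun j => if inb n m j then x else 0) K) (INR (cnt n m K) * x).
Proof.
  unfold inb, cnt. induction K.
  - rewrite sum0. destruct n; simpl; ring.
  - rewrite sumS, IHK. destruct (Nat.leb_spec n (S K)); destruct (Nat.leb_spec (S K) m); cbn [andb].
    + replace (S (Nat.min (S K) m) - n)%nat with (S (S (Nat.min K m) - n)) by lia. rewrite S_INR; ring.
    + replace (S (Nat.min (S K) m) - n)%nat with (S (Nat.min K m) - n)%nat by lia. ring.
    + replace (S (Nat.min (S K) m) - n)%nat with (S (Nat.min K m) - n)%nat by lia. ring.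
    + replace (S (Nat.min (S K) m) - n)%nat with (S (Nat.min K m) - n)%nat by lia. ring.
Qed.

Lemma cnt_le n m K : (cnt n m K <= S m - n)%nat.
Proof. unfold cnt; lia. Qed.
Lemma cnt_high n m K : (m <= K)%nat -> cnt n m K = (S m - n)%nat.
Proof. unfold cnt; lia. Qed.
Lemma cnt_low n m K : (K < n)%nat -> cnt n m K = 0%nat.
Proof. unfold cnt; lia. Qed.

Definition tvc (n m : nat) : R := / sqrt (INR (S m - n)).
Definition tv (n m : nat) : seqC := fun j => if inb n m j then RtoC (tvc n m) else RtoC 0.

Lemma tvc_sq n m : (n <= m)%nat -> tvc n m ^ 2 = / INR (S m - n).
Proof.
  intros H. unfold tvc. assert (0 < INR (S m - n)) by (apply lt_0_INR; lia).
  assert (H1 : sqrt (INR (S m - n)) * sqrt (INR (S m - n)) = INR (S m - n)) by (apply sqrt_sqrt; left; exact H0).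
  pose proof (sqrt_lt_R0 _ H0).
  set (X := INR (S m - n)) in *. set (s := sqrt X) in *.
  rewrite <- H1. simpl. field. apply Rgt_not_eq; lra.
Qed.

Lemma tv_sum n m k : sum_n (tv n m) k = RtoC (INR (cnt n m k) * tvc n m).
Proof.
  apply C_ext.
  - rewrite fst_sum, <- count_sum. apply sum_ext. intros; unfold tv; destruct (inb n m k0); auto.
  - rewrite snd_sum. transitivity 0; [|reflexivity]. apply sum_zero. intros; unfold tv; destruct (inb n m k0); auto.
Qed.

Lemma tv_l2 n m : (n <= m)%nat -> l2 (tv n m) /\ N2 (tv n m) <= 1.
Proof.
  intros H. assert (E : forall j, sq (tv n m j) = if inb n m j then tvc n m ^ 2 else 0).
  { intros j. unfold tv. destruct (inb n m j); unfold sq; simpl; ring. }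
  destruct (ps_bound (fun j => sq (tv n m j)) 1) as [H1 H2].
  - intros; apply sq_nonneg.
  - intros K. rewrite (sum_ext _ _ K (fun j _ => E j)), count_sum, tvc_sq; auto.
    assert (0 < INR (S m - n)) by (apply lt_0_INR; lia).
    pose proof (le_INR _ _ (cnt_le n m K)). apply Rmult_le_reg_r with (INR (S m - n)); auto.
    field_simplify; lra.
  - split. apply l2_sq; auto. rewrite N2_sq; auto.
Qed.

Section Tv.
Variable alpha : seqC.
Hypothesis Ha : l2 alpha.

Lemma Rtv_eq n m k : rhaly alpha (tv n m) k = Cmult (alpha k) (RtoC (INR (cnt n m k) * tvc n m)).
Proof. unfold rhaly. rewrite tv_sum. auto. Qed.

Lemma Rtv_sq n m k : sq (rhaly alpha (tv n m) k) = sq (alpha k) * (INR (cnt n m k) * tvc n m) ^ 2.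
Proof. rewrite Rtv_eq, sq_mult. f_equal. unfold sq; simpl; ring. Qed.

Lemma Rtv_low n m k : (k < n)%nat -> rhaly alpha (tv n m) k = RtoC 0.
Proof. intros H. rewrite Rtv_eq, cnt_low; auto. apply C_ext; simpl; ring. Qed.

Lemma Rtv_coef_le n m k : (n <= m)%nat -> (INR (cnt n m k) * tvc n m) ^ 2 <= INR (S m - n).
Proof.
  intros H. rewrite Rpow_mult_distr, tvc_sq; auto.
  assert (0 < INR (S m - n)) by (apply lt_0_INR; lia).
  pose proof (le_INR _ _ (cnt_le n m k)). pose proof (pos_INR (cnt n m k)).
  set (c := INR (cnt n m k)) in *. set (L := INR (S m - n)) in *.
  apply Rle_trans with (L * L * / L). apply Rmult_le_compat_r. left; apply Rinv_0_lt_compat; auto.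
  simpl. rewrite Rmult_1_r. apply Rmult_le_compat; lra.
  right; field; lra.
Qed.

Lemma Rtv_coef_high n m k : (n <= m)%nat -> (m <= k)%nat -> (INR (cnt n m k) * tvc n m) ^ 2 = INR (S m - n).
Proof.
  intros H H'. rewrite Rpow_mult_distr, tvc_sq, cnt_high; auto.
  assert (0 < INR (S m - n)) by (apply lt_0_INR; lia). field; lra.
Qed.

Lemma Rtv_pt n m k : (n <= m)%nat -> sq (rhaly alpha (tv n m) k) <= INR (S m - n) * sq (alpha k).
Proof.
  intros H. rewrite Rtv_sq, Rmult_comm. apply Rmult_le_compat_r. apply sq_nonneg. apply Rtv_coef_le; auto.
Qed.

Lemma Rtv_l2 n m : (n <= m)%nat -> l2 (rhaly alpha (tv n m)).
Proof. intros H. apply (l2_cmp _ alpha (INR (S m - n))); auto. intros; apply Rtv_pt; auto. Qed.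

Lemma tail2_sq m : tail2 alpha m = Series (fun k => sq (alpha (m + k)%nat)).
Proof. unfold tail2. apply Series_ext. intros; apply Cmod_sq. Qed.

Lemma tail2_ex m : ex_series (fun k => sq (alpha (m + k)%nat)).
Proof. apply l2_sq in Ha. apply (ex_series_incr_n _ m) in Ha. auto. Qed.

Lemma ex_cut (s : nat -> R) N : ex_series s -> ex_series (fun k => if (k <? N)%nat then 0 else s k).
Proof.
  intros H. apply (ex_series_incr_n _ N). apply (ex_series_incr_n _ N) in H.
  eapply ex_series_ext; [|apply H]. intros k; simpl. destruct (Nat.ltb_spec (N + k) N); auto; lia.
Qed.

Lemma Series_cut (s : nat -> R) N : Series (fun k => if (k <? N)%nat then 0 else s k) = Series (fun k => s (N + k)%nat).
Proof.
  rewrite (Series_incr_n_aux _ N). apply Series_ext. intros k. destruct (Nat.ltb_spec (N + k) N); auto; lia.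
  intros k Hk. destruct (Nat.ltb_spec k N); auto; lia.
Qed.

Lemma Rtv_big n m : (n <= m)%nat -> INR (S m - n) * tail2 alpha m <= N2 (rhaly alpha (tv n m)).
Proof.
  intros H. rewrite N2_sq, tail2_sq, <- Series_scal_l.
  rewrite <- (Series_cut (fun k => INR (S m - n) * sq (alpha k)) m).
  apply Series_le'.
  - intros k. destruct (Nat.ltb_spec k m). apply sq_nonneg.
    rewrite Rtv_sq, Rtv_coef_high; auto. lra.
  - apply ex_cut. apply ex_series_scal'. apply l2_sq; auto.
  - apply l2_sq. apply Rtv_l2; auto.
Qed.

Lemma Rtv_tail n m N' : (n <= m)%nat ->
  ex_series (fun k => if (k <? N')%nat then 0 else sq (rhaly alpha (tv n m) k)) /\
  Series (fun k => if (k <? N')%nat then 0 else sq (rhaly alpha (tv n m) k)) <= INR (S m - n) * tail2 alpha N'.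
Proof.
  intros H. split. apply ex_cut. apply l2_sq, Rtv_l2; auto.
  rewrite Series_cut, tail2_sq, <- Series_scal_l. apply Series_le'.
  intros; apply Rtv_pt; auto.
  apply (ex_series_incr_n (fun k => sq (rhaly alpha (tv n m) k)) N'). apply l2_sq, Rtv_l2; auto.
  apply ex_series_scal'. apply tail2_ex.
Qed.

Lemma tail_rec (a : nat -> R) N : ex_series a -> Series (fun k => a (N + k)%nat) = a N + Series (fun k => a (S N + k)%nat).
Proof.
  intros H. rewrite Series_incr_1. rewrite Nat.add_0_r. f_equal. apply Series_ext; intros; f_equal; lia.
  apply (ex_series_incr_n a N); auto.
Qed.

Lemma series_split (a : nat -> R) N : ex_series a -> Series a = sum_n a N + Series (fun k => a (S N + k)%nat).
Proof.
  intros H. induction N.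
  - rewrite sum0. rewrite <- (tail_rec a 0 H). apply Series_ext; auto.
  - rewrite IHN, sumS, (tail_rec a (S N) H). ring.
Qed.

Lemma tail2_small eps : 0 < eps -> exists N, forall N', (N <= N')%nat -> tail2 alpha N' <= eps.
Proof.
  intros He. pose proof Ha as H. apply l2_sq in H.
  pose proof (Series_correct _ H) as Hc.
  assert (Hl : is_lim_seq (sum_n (fun k => sq (alpha k))) (Series (fun k => sq (alpha k)))) by exact Hc.
  apply is_lim_seq_spec in Hl. destruct (Hl (mkposreal eps He)) as [N HN].
  exists (S N). intros N' HN'. destruct N' as [|N']; try lia.
  rewrite tail2_sq. specialize (HN N' ltac:(lia)). simpl in HN.
  rewrite (series_split _ N' H) in HN. apply Rabs_lt_between in HN. lra.
Qed.
End Tv.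
Open Scope R_scope.

Lemma sq_sub_lower x y eta : 0 < eta -> (1 - eta) * sq y - (1 + / eta) * sq x <= sq (Cminus x y).
Proof.
  intros He. pose proof (sq_add_eta (Cminus y x) x eta He).
  replace (Cplus (Cminus y x) x) with y in H by (destruct x, y; apply C_ext; simpl; ring).
  rewrite sq_sub_sym in H. pose proof (sq_nonneg x); pose proof (sq_nonneg y); pose proof (sq_nonneg (Cminus x y)).
  assert (0 < / eta) by (apply Rinv_0_lt_compat; auto).
  destruct (Rle_dec eta 1).
  - assert ((1 - eta) * sq y <= (1 - eta) * ((1 + eta) * sq (Cminus x y) + (1 + / eta) * sq x)) by (apply Rmult_le_compat_l; lra).
    assert ((1 - eta) * (1 + eta) * sq (Cminus x y) <= sq (Cminus x y)).
    { assert (0 <= eta * eta * sq (Cminus x y)) by (apply Rmult_le_pos; [nra|auto]). nra. }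
    assert ((1 - eta) * ((1 + / eta) * sq x) <= (1 + / eta) * sq x).
    { assert (0 <= eta * ((1 + / eta) * sq x)) by (apply Rmult_le_pos; [lra| apply Rmult_le_pos; lra]). nra. }
    nra.
  - assert ((1 - eta) * sq y <= 0) by (apply Rmult_le_0_r; lra). assert (0 <= (1 + / eta) * sq x) by (apply Rmult_le_pos; lra). lra.
Qed.

Lemma N2_from_bound (x h : seqC) M : 0 <= M -> l2 x -> l2 h -> l2norm x <= M * l2norm h -> N2 x <= M ^ 2 * N2 h.
Proof.
  intros HM Hx Hh H. unfold l2norm in H. fold (N2 x) in H. fold (N2 h) in H.
  pose proof (N2_nonneg x Hx); pose proof (N2_nonneg h Hh).
  rewrite <- (sqrt_sqrt (N2 x)), <- (sqrt_sqrt (N2 h)) by auto.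
  assert (0 <= sqrt (N2 x)) by apply sqrt_pos. assert (0 <= sqrt (N2 h)) by apply sqrt_pos.
  assert (sqrt (N2 x) * sqrt (N2 x) <= (M * sqrt (N2 h)) * (M * sqrt (N2 h))) by (apply Rmult_le_compat; auto).
  simpl. nra.
Qed.

Fixpoint nsq (fm fN : nat -> nat) (j : nat) : nat :=
  match j with O => O | S j' => fN (fm (nsq fm fN j')) end.

Section LX.
Variable alpha : seqC.
Hypothesis Ha : l2 alpha.

Definition CL (Q : op) : Prop :=
  (forall f, l2 f -> l2 (Q f)) /\
  (forall f g, l2 f -> l2 g -> Q (seq_sub f g) = seq_sub (Q f) (Q g)) /\
  forall u : nat -> seqC, (forall j, l2 (u j) /\ N2 (u j) <= 1) ->
    exists phi : nat -> nat, (forall j, (phi j < phi (S j))%nat) /\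
      forall eps, 0 < eps -> exists N, forall a b, (N <= a)%nat -> (N <= b)%nat ->
        N2 (seq_sub (Q (u (phi a))) (Q (u (phi b)))) <= eps.

Lemma rhaly_sub f g k : rhaly alpha (seq_sub f g) k = Cminus (rhaly alpha f k) (rhaly alpha g k).
Proof.
  unfold rhaly, seq_sub. rewrite sumC_minus. destruct (alpha k), (sum_n f k), (sum_n g k). apply C_ext; simpl; ring.
Qed.

Lemma exists_m (L : R) n : 0 < L -> Rbar_lt (Finite L) (J alpha n) ->
  exists m, (n <= m)%nat /\ L ^ 2 < INR (S m - n) * tail2 alpha m.
Proof.
  intros HL HJ. destruct (classic (exists m, (n <= m)%nat /\ L < sqrt (INR (m + 1 - n)) * sqrt (tail2 alpha m))) as [[m [Hnm Hlt]]|Hno].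
  - exists m. split; auto. replace (S m - n)%nat with (m + 1 - n)%nat by lia.
    rewrite <- (sqrt_sqrt (INR (m + 1 - n))), <- (sqrt_sqrt (tail2 alpha m)).
    2: apply tail2_nonneg; auto. 2: apply pos_INR.
    set (a := sqrt (INR (m + 1 - n))) in *. set (b := sqrt (tail2 alpha m)) in *.
    assert (L * L < (a * b) * (a * b)) by (apply Rmult_le_0_lt_compat; lra). simpl. nra.
  - exfalso. assert (Rbar_le (J alpha n) (Finite L)).
    { apply J_le. intros m Hm. destruct (Rle_dec (sqrt (INR (m + 1 - n)) * sqrt (tail2 alpha m)) L); auto.
      exfalso; apply Hno. exists m; split; auto; lra. }
    apply (Rbar_lt_not_le _ _ HJ H).
Qed.

Lemma lemmaX Q M : CL Q -> 0 <= M -> op_bounded_by (op_sub (rhaly alpha) Q) M -> Rbar_le (Jlim alpha) (Finite M).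
Proof.
  intros [HQl [HQlin HQc]] HM HB.
  destruct (Rbar_le_dec (Jlim alpha) (Finite M)) as [|Hn]; auto. exfalso. apply Rbar_not_le_lt in Hn.
  assert (HLex : exists L, M < L /\ forall n, Rbar_lt (Finite L) (J alpha n)).
  { destruct (Jlim alpha) as [J0| |] eqn:E; simpl in Hn.
    - exists ((M + J0) / 2). split. lra. intros n. eapply Rbar_lt_le_trans. 2: apply Jlim_le. rewrite E. simpl. lra.
    - exists (M + 1). split. lra. intros n. eapply Rbar_lt_le_trans. 2: apply Jlim_le. rewrite E. simpl. auto.
    - contradiction. }
  destruct HLex as [L [HML HL]]. assert (HLpos : 0 < L) by lra.
  assert (Hm : forall n, exists m, (n <= m)%nat /\ L ^ 2 < INR (S m - n) * tail2 alpha m).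
  { intros n. apply exists_m; auto. }
  set (delta := L ^ 2 - M ^ 2).
  assert (Hdelta : 0 < delta) by (unfold delta; simpl; nra).
  set (D0 := L ^ 2 + 2 * M ^ 2 + 1).
  assert (HD0 : 0 < D0) by (unfold D0; simpl; nra).
  set (eta := delta / D0).
  assert (Heta : 0 < eta) by (unfold eta; apply Rdiv_lt_0_compat; auto).
  assert (Heta1 : eta <= 1) by (unfold eta, delta, D0; apply Rmult_le_reg_r with (L ^ 2 + 2 * M ^ 2 + 1); auto; field_simplify; simpl; nra).
  assert (Hetaprod : eta * (L ^ 2 + 2 * M ^ 2) < delta).
  { unfold eta. replace delta with (delta / D0 * D0) at 2 by (field; lra). apply Rmult_lt_compat_l. auto. unfold D0; lra. }
  set (Ce := 2 + / eta). set (Ke := 1 + / eta).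
  assert (HCe : 0 < Ce) by (unfold Ce; pose proof (Rinv_0_lt_compat _ Heta); lra).
  assert (HKe : 0 < Ke) by (unfold Ke; pose proof (Rinv_0_lt_compat _ Heta); lra).
  set (tau := delta / (4 * Ce)). set (eps := delta / (4 * Ke)).
  assert (Htau : 0 < tau) by (unfold tau; apply Rdiv_lt_0_compat; lra).
  assert (Heps : 0 < eps) by (unfold eps; apply Rdiv_lt_0_compat; lra).
  assert (HN : forall m, exists N, (m < N)%nat /\ forall N', (N <= N')%nat -> INR (S m) * tail2 alpha N' <= tau).
  { intros m. assert (0 < INR (S m)) by (apply lt_0_INR; lia).
    destruct (tail2_small alpha Ha (tau / INR (S m))) as [N0 HN0]. apply Rdiv_lt_0_compat; auto.
    exists (Nat.max N0 (S m)). split. lia. intros N' HN'. specialize (HN0 N' ltac:(lia)).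
    apply Rmult_le_compat_l with (r := INR (S m)) in HN0; [|lra]. replace (INR (S m) * (tau / INR (S m))) with tau in HN0 by (field; lra). auto. }
  set (fm := fun n => proj1_sig (constructive_indefinite_description _ (Hm n))).
  assert (Hfm : forall n, (n <= fm n)%nat /\ L ^ 2 < INR (S (fm n) - n) * tail2 alpha (fm n)).
  { intros n. unfold fm. destruct (constructive_indefinite_description _ (Hm n)); auto. }
  set (fN := fun m => proj1_sig (constructive_indefinite_description _ (HN m))).
  assert (HfN : forall m, (m < fN m)%nat /\ forall N', (fN m <= N')%nat -> INR (S m) * tail2 alpha N' <= tau).
  { intros m. unfold fN. destruct (constructive_indefinite_description _ (HN m)); auto. }
  set (ns := nsq fm fN). set (ms := fun j => fm (ns j)).
  assert (F1 : forall j, (ns j <= ms j)%nat) by (intros; apply Hfm).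
  assert (F2 : forall j, (ms j < ns (S j))%nat) by (intros; apply HfN).
  assert (F3 : forall j j', (j < j')%nat -> (ns (S j) <= ns j')%nat).
  { intros j j' H. induction H. lia. pose proof (F1 m); pose proof (F2 m). lia. }
  assert (F4 : forall j, L ^ 2 < INR (S (ms j) - ns j) * tail2 alpha (ms j)) by (intros; apply Hfm).
  assert (F5 : forall j N', (ns (S j) <= N')%nat -> INR (S (ms j)) * tail2 alpha N' <= tau) by (intros; apply HfN; auto).
  set (u := fun j => tv (ns j) (ms j)).
  assert (Hu : forall j, l2 (u j) /\ N2 (u j) <= 1) by (intros; apply tv_l2; auto).
  destruct (HQc u Hu) as [phi [Hphi Hc]].
  destruct (Hc eps Heps) as [N HcN].
  set (j := phi N). set (j' := phi (S N)).
  assert (Hjj : (j < j')%nat) by apply Hphi.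
  assert (Hsep : (ms j < ns j')%nat) by (pose proof (F2 j); pose proof (F3 j j' Hjj); lia).
  set (h := seq_sub (u j) (u j')).
  assert (Hul : l2 (u j)) by apply Hu. assert (Hul' : l2 (u j')) by apply Hu.
  assert (Hhl : l2 h) by (apply l2_sub; auto).
  assert (HNh : N2 h <= 2).
  { assert (N2 h <= 1 * N2 (u j) + 1 * N2 (u j')).
    { apply N2_le2; auto. intros k. unfold h, seq_sub, u, tv.
      destruct (inb (ns j) (ms j) k) eqn:E1; destruct (inb (ns j') (ms j') k) eqn:E2.
      - exfalso. unfold inb in *. apply andb_prop in E1; apply andb_prop in E2.
        destruct E1 as [_ E1]; destruct E2 as [E2 _]. apply Nat.leb_le in E1; apply Nat.leb_le in E2. lia.
      - unfold sq; simpl; lra.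
      - unfold sq; simpl; lra.
      - unfold sq; simpl; lra. }
    pose proof (proj2 (Hu j)); pose proof (proj2 (Hu j')). lra. }
  destruct (HB h Hhl) as [Hxl Hxb].
  pose proof (N2_from_bound _ _ M HM Hxl Hhl Hxb) as HNx.
  assert (HQh : Q h = seq_sub (Q (u j)) (Q (u j'))) by (apply HQlin; auto).
  assert (HNQ : N2 (Q h) <= eps) by (rewrite HQh; apply HcN; lia).
  assert (HQhl : l2 (Q h)) by (apply HQl; auto).
  assert (HRdec : forall k, rhaly alpha h k = Cplus (op_sub (rhaly alpha) Q h k) (Q h k)).
  { intros k. unfold op_sub, seq_sub. destruct (rhaly alpha h k), (Q h k). apply C_ext; simpl; ring. }
  assert (HRhl : l2 (rhaly alpha h)).
  { apply (l2_cmp2 _ (op_sub (rhaly alpha) Q h) (Q h) 2); auto. intros k; rewrite HRdec; apply sq_add2. }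
  assert (Hup : N2 (rhaly alpha h) <= (1 + eta) * N2 (op_sub (rhaly alpha) Q h) + Ke * N2 (Q h)).
  { apply N2_le2; auto. intros k; rewrite HRdec; apply sq_add_eta; auto. }
  set (x := rhaly alpha (u j)). set (y := rhaly alpha (u j')).
  assert (Hxl2 : l2 x) by (apply Rtv_l2; auto). assert (Hyl2 : l2 y) by (apply Rtv_l2; auto).
  set (cut := fun k => if (k <? ns j')%nat then 0 else sq (x k)).
  destruct (Rtv_tail alpha Ha (ns j) (ms j) (ns j') (F1 j)) as [Hcutex Hcutle].
  fold x in Hcutex, Hcutle. fold cut in Hcutex, Hcutle.
  assert (Hcut : Series cut <= tau).
  { eapply Rle_trans. apply Hcutle. eapply Rle_trans. 2: apply (F5 j (ns j')); auto.
    apply Rmult_le_compat_r. apply tail2_nonneg; auto. apply le_INR; lia. }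
  assert (Hpt : forall k, sq (x k) + ((1 - eta) * sq (y k) + (- Ce) * cut k) <= sq (rhaly alpha h k)).
  { intros k. unfold h. rewrite rhaly_sub. fold x y. unfold cut. destruct (Nat.ltb_spec k (ns j')).
    - unfold y, u. rewrite (Rtv_low alpha (ns j') (ms j') k H). fold (u j).
      replace (Cminus (x k) (RtoC 0)) with (x k) by (destruct (x k); apply C_ext; simpl; ring).
      rewrite sq_zero. lra.
    - pose proof (sq_sub_lower (x k) (y k) eta Heta). unfold Ce. lra. }
  assert (Hlow : N2 x + ((1 - eta) * N2 y + (- Ce) * Series cut) <= N2 (rhaly alpha h)).
  { assert (ex1 : ex_series (fun k => sq (x k))) by (apply l2_sq; auto).
    assert (ex2 : ex_series (fun k => sq (y k))) by (apply l2_sq; auto).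
    assert (ex3 : ex_series (fun k => sq (rhaly alpha h k))) by (apply l2_sq; auto).
    assert (ex4 : ex_series (fun k => (1 - eta) * sq (y k))) by (apply ex_series_scal'; auto).
    assert (ex5 : ex_series (fun k => (- Ce) * cut k)) by (apply ex_series_scal'; auto).
    assert (ex6 : ex_series (fun k => (1 - eta) * sq (y k) + (- Ce) * cut k)) by (apply ex_series_plus'; auto).
    rewrite !N2_sq.
    replace (Series (fun k => sq (x k)) + ((1 - eta) * Series (fun k => sq (y k)) + - Ce * Series cut))
      with (Series (fun k => sq (x k) + ((1 - eta) * sq (y k) + (- Ce) * cut k))).
    apply Series_le'; auto. apply ex_series_plus'; auto.
    rewrite Series_plus', Series_plus', !Series_scal_l; auto. }
  assert (Hx1 : L ^ 2 < N2 x).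
  { eapply Rlt_le_trans. apply (F4 j). unfold x, u. apply Rtv_big; auto. }
  assert (Hy1 : L ^ 2 < N2 y).
  { eapply Rlt_le_trans. apply (F4 j'). unfold y, u. apply Rtv_big; auto. }
  assert (Hy2 : (1 - eta) * L ^ 2 <= (1 - eta) * N2 y) by (apply Rmult_le_compat_l; lra).
  assert (Hc2 : Ce * Series cut <= Ce * tau) by (apply Rmult_le_compat_l; lra).
  assert (HCt : Ce * tau = delta / 4) by (unfold tau; field; lra).
  assert (HKe2 : Ke * N2 (Q h) <= Ke * eps) by (apply Rmult_le_compat_l; lra).
  assert (HKt : Ke * eps = delta / 4) by (unfold eps; field; lra).
  assert (Hx2 : (1 + eta) * N2 (op_sub (rhaly alpha) Q h) <= (1 + eta) * (M ^ 2 * 2)).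
  { apply Rmult_le_compat_l. lra. eapply Rle_trans. apply HNx. apply Rmult_le_compat_l; auto. simpl; nra. }
  unfold delta in *. lra.
Qed.
End LX.
Open Scope R_scope.

Definition incr (s : nat -> nat) : Prop := forall j, (s j < s (S j))%nat.
Definition good (y : nat -> R) (s : nat -> nat) : Prop := exists l, forall j, Rabs (y (s j) - l) <= / INR (S j).

Lemma incr_ge s : incr s -> forall j, (j <= s j)%nat.
Proof. intros H j. induction j. lia. specialize (H j). lia. Qed.

Lemma incr_mono s : incr s -> forall a b, (a <= b)%nat -> (s a <= s b)%nat.
Proof. intros H a b Hab. induction Hab. lia. specialize (H m). lia. Qed.

Lemma incr_strict s : incr s -> forall a b, (a < b)%nat -> (s a < s b)%nat.
Proof. intros H a b Hab. induction Hab. apply H. specialize (H m). lia. Qed.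

Fixpoint selseq (c : nat -> nat -> nat) (j : nat) : nat :=
  match j with O => c O O | S j' => c (S (selseq c j')) (S j') end.

Lemma BW1 (y : nat -> R) C : (forall j, Rabs (y j) <= C) -> exists s, incr s /\ good y s.
Proof.
  intros HC. destruct (Bolzano_Weierstrass y (fun c => - C <= c <= C) (compact_P3 (- C) C)) as [l Hl].
  { intros n. specialize (HC n). apply Rabs_le_between in HC; auto. }
  assert (Hclose : forall N k, exists p, (N <= p)%nat /\ Rabs (y p - l) < / INR (S k)).
  { intros N k. assert (0 < / INR (S k)) by (apply Rinv_0_lt_compat, lt_0_INR; lia).
    destruct (Hl (disc l (mkposreal _ H)) N) as [p [Hp Hv]].
    exists (mkposreal _ H). intros z Hz; auto. exists p; split; auto. }
  set (c := fun N k => proj1_sig (constructive_indefinite_description _ (Hclose N k))).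
  assert (Hc : forall N k, (N <= c N k)%nat /\ Rabs (y (c N k) - l) < / INR (S k)).
  { intros. unfold c. destruct (constructive_indefinite_description _ (Hclose N k)); auto. }
  exists (selseq c). split.
  - intros j. simpl. destruct (Hc (S (selseq c j)) (S j)). lia.
  - exists l. intros j. destruct j; simpl; left; apply Hc.
Qed.

Lemma Sel_exists (y : nat -> R) : exists s, incr s /\ ((exists C, forall j, Rabs (y j) <= C) -> good y s).
Proof.
  destruct (classic (exists C, forall j, Rabs (y j) <= C)) as [[C HC]|Hno].
  - destruct (BW1 y C HC) as [s [H1 H2]]. exists s; auto.
  - exists (fun j => j). split. intros j; lia. intros H; contradiction.
Qed.

Definition Sel (y : nat -> R) : nat -> nat := proj1_sig (constructive_indefinite_description _ (Sel_exists y)).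

Lemma Sel_spec y : incr (Sel y) /\ ((exists C, forall j, Rabs (y j) <= C) -> good y (Sel y)).
Proof. unfold Sel. destruct (constructive_indefinite_description _ (Sel_exists y)); auto. Qed.

Fixpoint Psi (x : nat -> nat -> R) (i : nat) : nat -> nat :=
  match i with
  | O => Sel (x O)
  | S i' => fun j => Psi x i' (Sel (fun j' => x (S i') (Psi x i' j')) j)
  end.

Definition diagphi (x : nat -> nat -> R) (j : nat) : nat := Psi x j j.

Section Diag.
Variable x : nat -> nat -> R.
Variable C : nat -> R.
Hypothesis HC : forall i j, Rabs (x i j) <= C i.

Lemma Psi_incr i : incr (Psi x i).
Proof.
  induction i; simpl. apply Sel_spec.
  intros j. apply incr_strict; auto. apply (proj1 (Sel_spec _)).
Qed.

Lemma Psi_good i : good (x i) (Psi x i).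
Proof.
  destruct i; simpl. apply Sel_spec. exists (C 0%nat); auto.
  destruct (proj2 (Sel_spec (fun j' => x (S i) (Psi x i j')))) as [l Hl].
  exists (C (S i)); auto. exists l. auto.
Qed.

Lemma Psi_sub i d : exists sigma, (forall j, (j <= sigma j)%nat) /\ forall j, Psi x (i + d) j = Psi x i (sigma j).
Proof.
  induction d.
  - exists (fun j => j). split; auto. intros; rewrite Nat.add_0_r; auto.
  - destruct IHd as [sg [H1 H2]]. replace (i + S d)%nat with (S (i + d)) by lia.
    set (s := Sel (fun j' => x (S (i + d)) (Psi x (i + d) j'))).
    exists (fun j => sg (s j)). split.
    + intros j. pose proof (incr_ge s (proj1 (Sel_spec _)) j). specialize (H1 (s j)). lia.
    + intros j. simpl. rewrite H2. auto.
Qed.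

Lemma diag_incr : incr (diagphi x).
Proof.
  intros j. unfold diagphi. simpl.
  set (s := Sel (fun j' => x (S j) (Psi x j j'))).
  pose proof (incr_ge s (proj1 (Sel_spec _)) (S j)).
  pose proof (incr_mono _ (Psi_incr j) _ _ H). pose proof (Psi_incr j j). lia.
Qed.

Lemma diag_conv i : exists l, forall j, (i <= j)%nat -> Rabs (x i (diagphi x j) - l) <= / INR (S j).
Proof.
  destruct (Psi_good i) as [l Hl]. exists l. intros j Hj. unfold diagphi.
  destruct (Psi_sub i (j - i)) as [sg [H1 H2]]. replace (i + (j - i))%nat with j in H2 by lia.
  rewrite H2. eapply Rle_trans. apply Hl. apply Rinv_le_contravar. apply lt_0_INR; lia. apply le_INR. specialize (H1 j). lia.
Qed.
End Diag.
Open Scope R_scope.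

Lemma N2_lt_of_l2norm f r : l2 f -> 0 <= r -> l2norm f < r -> N2 f < r ^ 2.
Proof.
  intros Hf Hr H. unfold l2norm in H. fold (N2 f) in H. pose proof (N2_nonneg f Hf).
  rewrite <- (sqrt_sqrt (N2 f)) by auto. pose proof (sqrt_pos (N2 f)).
  simpl. nra.
Qed.

Lemma l2norm_le1 f : l2 f -> N2 f <= 1 -> l2norm f <= 1.
Proof. intros Hf H. unfold l2norm. fold (N2 f). rewrite <- sqrt_1. apply sqrt_le_1_alt; auto. Qed.

Lemma N2_sub_tri (a b g : seqC) : l2 a -> l2 b -> l2 g ->
  N2 (seq_sub a b) <= 2 * N2 (seq_sub a g) + 2 * N2 (seq_sub b g).
Proof.
  intros Ha Hb Hg. apply N2_le2; try apply l2_sub; auto.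
  intros k. unfold seq_sub. replace (Cminus (a k) (b k)) with (Cminus (Cminus (a k) (g k)) (Cminus (b k) (g k))).
  apply sq_sub2. destruct (a k), (b k), (g k); apply C_ext; simpl; ring.
Qed.

Section Cpt.
Variable alpha : seqC.
Hypothesis Ha : l2 alpha.

Lemma rhaly_sub_fun f g : rhaly alpha (seq_sub f g) = seq_sub (rhaly alpha f) (rhaly alpha g).
Proof. apply functional_extensionality; intros k. apply rhaly_sub. Qed.

Lemma compact_CL : compact_op (rhaly alpha) -> CL (rhaly alpha).
Proof.
  intros [Hl Hc]. split; [auto|split].
  - intros; apply rhaly_sub_fun.
  - intros u Hu. destruct (Hc u 1) as [phi [g [Hphi [Hg Hlim]]]].
    { intros j. split. apply Hu. apply l2norm_le1; apply Hu. }
    exists phi. split; auto. intros eps He.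
    apply is_lim_seq_spec in Hlim.
    assert (Hs : 0 < sqrt (eps / 4)) by (apply sqrt_lt_R0; lra).
    destruct (Hlim (mkposreal _ Hs)) as [N HN]. exists N. intros a b Ha' Hb'.
    assert (Hul : forall j, l2 (rhaly alpha (u (phi j)))) by (intros; apply Hl; apply Hu).
    assert (H1 : forall j, (N <= j)%nat -> N2 (seq_sub (rhaly alpha (u (phi j))) g) <= eps / 4).
    { intros j Hj. specialize (HN j Hj). simpl in HN. rewrite Rminus_0_r in HN.
      pose proof (l2_sub _ _ (Hul j) Hg) as Hl2.
      assert (0 <= l2norm (seq_sub (rhaly alpha (u (phi j))) g)) by apply sqrt_pos.
      rewrite Rabs_pos_eq in HN by auto.
      pose proof (N2_lt_of_l2norm _ _ Hl2 (sqrt_pos _) HN). simpl in H0. rewrite Rmult_1_r, sqrt_sqrt in H0 by lra. lra. }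
    eapply Rle_trans. apply (N2_sub_tri _ _ g); auto.
    pose proof (H1 a Ha'); pose proof (H1 b Hb'). lra.
Qed.

Lemma sub_self_bounded T : (forall f, l2 f -> l2 (T f)) -> op_bounded_by (op_sub T T) 0.
Proof.
  intros HT f Hf. assert (E : forall k, op_sub T T f k = RtoC 0).
  { intros k. unfold op_sub, seq_sub. destruct (T f k); apply C_ext; simpl; ring. }
  split.
  - apply (l2_cmp _ f 0); auto. intros k; rewrite E, sq_zero. lra.
  - unfold l2norm. rewrite Rmult_0_l. rewrite (Series_ext _ (fun _ => 0)). destruct zero_series as [_ ->]. rewrite sqrt_0; lra.
    intros k. rewrite E. rewrite Cmod_0. simpl; ring.
Qed.

Lemma Rbar_eq0 (x : Rbar) : Rbar_le x (Finite 0) -> Rbar_le (Finite 0) x -> x = Finite 0.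
Proof. destruct x; simpl; intros; try contradiction. f_equal; lra. Qed.

Lemma compact_J0 : compact_op (rhaly alpha) -> Jlim alpha = Finite 0.
Proof.
  intros Hc. apply Rbar_eq0. apply (lemmaX alpha Ha (rhaly alpha) 0). apply compact_CL; auto. lra.
  apply sub_self_bounded. apply Hc. apply Jlim_nonneg; auto.
Qed.
End Cpt.
Open Scope R_scope.

Lemma term_le_sum (a : nat -> R) k : (forall j, 0 <= a j) -> a k <= sum_n a k.
Proof. intros H. destruct k. rewrite sum0; lra. rewrite sumS. pose proof (sum_nonneg a k (fun j _ => H j)). lra. Qed.

Lemma sq_le_N2 f k : l2 f -> sq (f k) <= N2 f.
Proof. intros H. eapply Rle_trans. apply (term_le_sum (fun j => sq (f j))). intros; apply sq_nonneg. apply sum_le_N2; auto. Qed.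

Lemma sum_const (c : R) n : @eq R (sum_n (fun _ => c) n) (INR (S n) * c).
Proof. induction n. rewrite sum0; simpl; ring. rewrite sumS, IHn, (S_INR (S n)); ring. Qed.

Lemma N2_le_sq f B : l2 f -> 0 <= B -> l2norm f <= B -> N2 f <= B ^ 2.
Proof.
  intros Hf HB H. unfold l2norm in H; fold (N2 f) in H. pose proof (N2_nonneg f Hf).
  rewrite <- (sqrt_sqrt (N2 f)) by auto. pose proof (sqrt_pos (N2 f)). simpl.
  assert (sqrt (N2 f) * sqrt (N2 f) <= B * B) by (apply Rmult_le_compat; auto). lra.
Qed.

Lemma inv_sq_le r : 1 <= r -> (/ r) ^ 2 <= / r.
Proof.
  intros H. assert (0 < / r) by (apply Rinv_0_lt_compat; lra). assert (/ r <= 1).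
  { rewrite <- Rinv_1. apply Rinv_le_contravar; lra. }
  simpl. rewrite Rmult_1_r. apply Rle_trans with (/ r * 1). apply Rmult_le_compat_l; lra. lra.
Qed.

Lemma INR_S_ge1 n : 1 <= INR (S n).
Proof. rewrite S_INR. pose proof (pos_INR n). lra. Qed.

Lemma exists_big (A : R) : exists N : nat, forall M, (N <= M)%nat -> A <= INR (S M).
Proof.
  destruct (INR_unbounded A) as [N HN]. exists N. intros M HM. apply le_INR in HM. rewrite S_INR. lra.
Qed.

Section J0.
Variable alpha : seqC.
Hypothesis Ha : l2 alpha.
Hypothesis HJ0 : Jlim alpha = Finite 0.

Lemma smallJ d : 0 < d -> exists n x, J alpha n = Finite x /\ x < d.
Proof.
  intros Hd. destruct (classic (exists n x, J alpha n = Finite x /\ x < d)) as [H|H]; auto. exfalso.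
  assert (Rbar_le (Finite d) (Jlim alpha)).
  { apply Jlim_lb. intros n. pose proof (J_nonneg alpha n). destruct (J alpha n) as [x| |] eqn:E; simpl in *; auto.
    destruct (Rle_dec d x); auto. exfalso; apply H. exists n, x. split; auto; lra. }
  rewrite HJ0 in H0. simpl in H0. lra.
Qed.

Lemma R_decomp n f k : rhaly alpha f k = Cplus (Dn alpha n f k) (Pn alpha n f k).
Proof. unfold Dn, op_sub, seq_sub. destruct (rhaly alpha f k), (Pn alpha n f k). apply C_ext; simpl; ring. Qed.

Lemma R_l2 f : l2 f -> l2 (rhaly alpha f).
Proof.
  intros Hf. destruct (smallJ 1) as [n [x [Hx _]]]. lra.
  destruct (Dn_bound alpha Ha n (x ^ 2) (J_fin alpha Ha n x Hx) f Hf) as [H1 _].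
  destruct (Pn_bound alpha Ha n f) as [H2 _].
  apply (l2_cmp2 _ _ _ 2 (fun k => Rle_trans _ _ _ (Req_le _ _ (f_equal sq (R_decomp n f k))) (sq_add2 _ _)) H1 H2).
Qed.

Section Cv.
Variable u : nat -> seqC.
Variable B : R.
Variable c : nat -> C.
Variable phi : nat -> nat.
Hypothesis HB : 0 <= B.
Hypothesis Hu : forall j, l2 (u j) /\ N2 (u j) <= B ^ 2.
Hypothesis Hcv : forall k j, (2 * k + 1 <= j)%nat -> sq (Cminus (u (phi j) k) (c k)) <= 2 * (/ INR (S j)) ^ 2.

Let v j := u (phi j).
Let g k := Cmult (alpha k) (sum_n c k).

Lemma Hvl j : l2 (v j). Proof. apply Hu. Qed.

Lemma Rg_close K j : (2 * K + 1 <= j)%nat -> forall k, (k <= K)%nat ->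
  sq (Cminus (rhaly alpha (v j) k) (g k)) <= sq (alpha k) * (INR (S k) * INR (S k) * 2) * / INR (S j).
Proof.
  intros HK k Hk. unfold rhaly, g.
  replace (Cminus (Cmult (alpha k) (sum_n (v j) k)) (Cmult (alpha k) (sum_n c k)))
    with (Cmult (alpha k) (sum_n (fun i => Cminus (v j i) (c i)) k)).
  2:{ rewrite sumC_minus. destruct (alpha k), (sum_n (v j) k), (sum_n c k). apply C_ext; simpl; ring. }
  rewrite sq_mult, Rmult_assoc. apply Rmult_le_compat_l. apply sq_nonneg.
  eapply Rle_trans. apply sq_sum_le. eapply Rle_trans. apply cs_count.
  rewrite !Rmult_assoc. apply Rmult_le_compat_l. apply pos_INR.
  eapply Rle_trans. apply (sum_le _ (fun _ => 2 * / INR (S j))).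
  - intros i Hi. rewrite Cmod_sq. eapply Rle_trans. apply Hcv. lia.
    apply Rmult_le_compat_l. lra. apply inv_sq_le, INR_S_ge1.
  - rewrite sum_const. right; ring.
Qed.

Lemma Cauchy_v eps : 0 < eps -> exists N, forall a b, (N <= a)%nat -> (N <= b)%nat ->
  N2 (seq_sub (rhaly alpha (v a)) (rhaly alpha (v b))) <= eps.
Proof.
  intros He.
  set (d := sqrt (eps / (64 * (B ^ 2 + 1)))).
  assert (HB2 : 0 <= B ^ 2) by (simpl; nra).
  assert (Hd : 0 < d) by (apply sqrt_lt_R0; apply Rdiv_lt_0_compat; lra).
  destruct (smallJ d Hd) as [n [x [Hx Hxd]]].
  assert (Hx0 : 0 <= x) by (pose proof (J_nonneg alpha n) as H; rewrite Hx in H; auto).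
  assert (Hdd : d * d = eps / (64 * (B ^ 2 + 1))) by (apply sqrt_sqrt; left; apply Rdiv_lt_0_compat; lra).
  set (Na := N2 alpha). assert (HNa : 0 <= Na) by (apply N2_nonneg; auto).
  set (Sn := INR (S n)). assert (HSn : 1 <= Sn) by apply INR_S_ge1.
  destruct (exists_big (32 * (Na + 1) * Sn * Sn / eps)) as [N0 HN0].
  exists (Nat.max N0 (2 * n + 1)). intros a b Ha' Hb'.
  set (h := seq_sub (v a) (v b)).
  assert (Hhl : l2 h) by (apply l2_sub; apply Hvl).
  rewrite <- rhaly_sub_fun. fold h.
  assert (HNh : N2 h <= 4 * B ^ 2).
  { eapply Rle_trans. apply (N2_le2 h (v a) (v b) 2 2); try apply Hvl; auto. intros; apply sq_sub2.
    pose proof (proj2 (Hu (phi a))); pose proof (proj2 (Hu (phi b))). fold (v a) (v b) in *. lra. }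
  destruct (Dn_bound alpha Ha n (x ^ 2) (J_fin alpha Ha n x Hx) h Hhl) as [HDl HDb].
  destruct (Pn_bound alpha Ha n h) as [HPl HPb].
  assert (HRh : N2 (rhaly alpha h) <= 2 * N2 (Dn alpha n h) + 2 * N2 (Pn alpha n h)).
  { apply N2_le2; [intros k; rewrite (R_decomp n); apply sq_add2 | apply R_l2; auto | auto | auto]. }
  set (rho := / INR (S (Nat.max N0 (2 * n + 1)))).
  assert (Hrho : 0 < rho) by (apply Rinv_0_lt_compat, lt_0_INR; lia).
  assert (Hinv : forall j, (Nat.max N0 (2 * n + 1) <= j)%nat -> (/ INR (S j)) ^ 2 <= rho).
  { intros j Hj. eapply Rle_trans. apply inv_sq_le, INR_S_ge1. apply Rinv_le_contravar. apply lt_0_INR; lia. apply le_INR; lia. }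
  assert (Hsum : sum_n (fun j => sq (h j)) n <= Sn * (8 * rho)).
  { unfold Sn. rewrite <- sum_const. apply sum_le. intros j Hj. unfold h, seq_sub.
    replace (Cminus (v a j) (v b j)) with (Cminus (Cminus (v a j) (c j)) (Cminus (v b j) (c j)))
      by (destruct (v a j), (v b j), (c j); apply C_ext; simpl; ring).
    eapply Rle_trans. apply sq_sub2.
    pose proof (Hcv j a ltac:(lia)). pose proof (Hcv j b ltac:(lia)). fold (v a) (v b) in *.
    pose proof (Hinv a Ha'). pose proof (Hinv b Hb'). lra. }
  assert (HrhoN : rho * (32 * (Na + 1) * Sn * Sn) <= eps).
  { specialize (HN0 (Nat.max N0 (2 * n + 1)) ltac:(lia)). unfold rho.
    set (I := INR (S (Nat.max N0 (2 * n + 1)))) in *. set (A := 32 * (Na + 1) * Sn * Sn) in *.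
    assert (HI : 0 < I) by (unfold I; apply lt_0_INR; lia).
    assert (A <= eps * I).
    { replace A with (A / eps * eps) by (field; lra). rewrite Rmult_comm. apply Rmult_le_compat_l; lra. }
    apply Rle_trans with (/ I * (eps * I)). apply Rmult_le_compat_l. left; apply Rinv_0_lt_compat; auto. auto.
    right; field; lra. }
  assert (T1 : 2 * N2 (Dn alpha n h) <= eps / 2).
  { eapply Rle_trans. apply Rmult_le_compat_l. lra. apply HDb.
    assert (x ^ 2 <= d * d) by (simpl; nra). rewrite Hdd in H.
    assert (4 * x ^ 2 * N2 h <= 4 * (eps / (64 * (B ^ 2 + 1))) * (4 * B ^ 2)).
    { apply Rmult_le_compat; try lra. pose proof (pow2_ge_0 x); lra. apply N2_nonneg; auto. }
    assert (4 * (eps / (64 * (B ^ 2 + 1))) * (4 * B ^ 2) = eps / 4 * (B ^ 2 / (B ^ 2 + 1))) by (field; lra).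
    assert (Hq : B ^ 2 / (B ^ 2 + 1) <= 1) by (apply Rmult_le_reg_r with (B ^ 2 + 1); [lra|]; field_simplify; lra).
    assert (eps / 4 * (B ^ 2 / (B ^ 2 + 1)) <= eps / 4) by (apply Rmult_le_compat_l with (r := eps / 4) in Hq; lra).
    lra. }
  assert (T2 : 2 * N2 (Pn alpha n h) <= eps / 2).
  { eapply Rle_trans. apply Rmult_le_compat_l. lra. apply HPb. fold Na Sn.
    assert (Na * (Sn * sum_n (fun j => sq (h j)) n) <= Na * (Sn * (Sn * (8 * rho)))).
    { apply Rmult_le_compat_l; auto. apply Rmult_le_compat_l; lra. }
    assert (Na * (Sn * (Sn * (8 * rho))) <= (Na + 1) * (Sn * (Sn * (8 * rho)))).
    { apply Rmult_le_compat_r; [|lra]. apply Rmult_le_pos; [lra|]. apply Rmult_le_pos; lra. }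
    nra. }
  lra.
Qed.

Lemma limit_v eps : 0 < eps -> exists N, forall a, (N <= a)%nat ->
  l2 (seq_sub (rhaly alpha (v a)) g) /\ N2 (seq_sub (rhaly alpha (v a)) g) <= 4 * eps.
Proof.
  intros He. destruct (Cauchy_v eps He) as [N HN]. exists N. intros a Ha'.
  assert (Hp : forall K, sum_n (fun k => sq (seq_sub (rhaly alpha (v a)) g k)) K <= 4 * eps).
  { intros K. set (W := sum_n (fun k => sq (alpha k) * (INR (S k) * INR (S k) * 2)) K).
    assert (HW : 0 <= W) by (apply sum_nonneg; intros; apply Rmult_le_pos; [apply sq_nonneg| pose proof (pos_INR (S k)); nra]).
    destruct (exists_big (W / eps)) as [N1 HN1].
    set (b := Nat.max N (Nat.max N1 (2 * K + 1))).
    assert (Hb : W * / INR (S b) <= eps).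
    { specialize (HN1 b ltac:(unfold b; lia)).
      set (I := INR (S b)) in *. assert (HI : 0 < I) by (unfold I; apply lt_0_INR; lia).
      assert (W <= eps * I).
      { replace W with (W / eps * eps) by (field; lra). rewrite Rmult_comm. apply Rmult_le_compat_l; lra. }
      apply Rle_trans with ((eps * I) * / I). apply Rmult_le_compat_r. left; apply Rinv_0_lt_compat; auto. auto.
      right; field; lra. }
    apply Rle_trans with (sum_n (fun k => 2 * sq (seq_sub (rhaly alpha (v a)) (rhaly alpha (v b)) k) +
       2 * (/ INR (S b) * (sq (alpha k) * (INR (S k) * INR (S k) * 2)))) K).
    { apply sum_le. intros k Hk.
      unfold seq_sub. replace (Cminus (rhaly alpha (v a) k) (g k)) with
        (Cplus (Cminus (rhaly alpha (v a) k) (rhaly alpha (v b) k)) (Cminus (rhaly alpha (v b) k) (g k)))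
        by (destruct (rhaly alpha (v a) k), (rhaly alpha (v b) k), (g k); apply C_ext; simpl; ring).
      eapply Rle_trans. apply sq_add2. apply Rplus_le_compat_l.
      pose proof (Rg_close K b ltac:(unfold b; lia) k Hk). lra. }
    rewrite sum_plus, !sum_scal. fold W.
    assert (Hl2 : l2 (seq_sub (rhaly alpha (v a)) (rhaly alpha (v b)))) by (apply l2_sub; apply R_l2; apply Hvl).
    pose proof (sum_le_N2 _ K Hl2). pose proof (HN a b Ha' ltac:(unfold b; lia)). lra. }
  destruct (ps_bound _ _ (fun k => sq_nonneg _) Hp) as [H1 H2]. split. apply l2_sq; auto. rewrite N2_sq; auto.
Qed.

Lemma conv_v : exists g0, l2 g0 /\ is_lim_seq (fun j => l2norm (seq_sub (rhaly alpha (v j)) g0)) 0.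
Proof.
  exists g. destruct (limit_v 1) as [N HN]. lra.
  assert (Hg : l2 g).
  { destruct (HN N (le_n N)) as [H1 _]. apply (l2_cmp2 _ (rhaly alpha (v N)) (seq_sub (rhaly alpha (v N)) g) 2); auto.
    intros k. replace (g k) with (Cminus (rhaly alpha (v N) k) (seq_sub (rhaly alpha (v N)) g k))
      by (unfold seq_sub; destruct (rhaly alpha (v N) k), (g k); apply C_ext; simpl; ring). apply sq_sub2.
    apply R_l2, Hvl. }
  split; auto. apply is_lim_seq_spec. intros e. destruct e as [e He]. simpl.
  destruct (limit_v (e * e / 8)) as [N1 HN1]. apply Rdiv_lt_0_compat; nra.
  exists N1. intros j Hj. destruct (HN1 j Hj) as [Hl Hb]. rewrite Rminus_0_r.
  unfold l2norm. fold (N2 (seq_sub (rhaly alpha (v j)) g)). rewrite Rabs_pos_eq by apply sqrt_pos.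
  apply Rle_lt_trans with (sqrt (e * e / 2)). apply sqrt_le_1_alt. lra.
  apply Rlt_le_trans with (sqrt (e * e)). apply sqrt_lt_1_alt. split. apply Rmult_le_pos; [nra|lra]. nra.
  rewrite sqrt_square; lra.
Qed.
End Cv.

Lemma J0_compact : compact_op (rhaly alpha).
Proof.
  split. apply R_l2. intros u B Hu.
  assert (HB : 0 <= B) by (destruct (Hu 0%nat) as [_ H]; eapply Rle_trans; [apply sqrt_pos|apply H]).
  assert (Hu2 : forall j, l2 (u j) /\ N2 (u j) <= B ^ 2) by (intros j; destruct (Hu j); split; auto; apply N2_le_sq; auto).
  set (x := fun i j => if Nat.even i then fst (u j (Nat.div2 i)) else snd (u j (Nat.div2 i))).
  assert (HC : forall i j, Rabs (x i j) <= B).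
  { intros i j. assert (Cmod (u j (Nat.div2 i)) <= B).
    { destruct (Hu2 j) as [Hl HN]. pose proof (sq_le_N2 _ (Nat.div2 i) Hl). rewrite <- Cmod_sq in H.
      pose proof (Cmod_ge_0 (u j (Nat.div2 i))). simpl in H. nra. }
    pose proof (Rmax_Cmod (u j (Nat.div2 i))). unfold x. destruct (Nat.even i).
    pose proof (Rmax_l (Rabs (fst (u j (Nat.div2 i)))) (Rabs (snd (u j (Nat.div2 i))))). lra.
    pose proof (Rmax_r (Rabs (fst (u j (Nat.div2 i)))) (Rabs (snd (u j (Nat.div2 i))))). lra. }
  set (phi := diagphi x).
  pose proof (diag_incr x) as Hphi.
  pose proof (diag_conv x (fun _ => B) HC) as Hl.
  set (lim := fun i => proj1_sig (constructive_indefinite_description _ (Hl i))).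
  assert (Hlim : forall i j, (i <= j)%nat -> Rabs (x i (phi j) - lim i) <= / INR (S j)).
  { intros i. unfold lim. destruct (constructive_indefinite_description _ (Hl i)); auto. }
  set (c := fun k => (lim (2 * k)%nat, lim (2 * k + 1)%nat) : C).
  assert (Hcv : forall k j, (2 * k + 1 <= j)%nat -> sq (Cminus (u (phi j) k) (c k)) <= 2 * (/ INR (S j)) ^ 2).
  { intros k j Hj. pose proof (Hlim (2 * k)%nat j ltac:(lia)). pose proof (Hlim (2 * k + 1)%nat j Hj).
    unfold x in H, H0. rewrite Nat.even_even, Nat.div2_double in H. rewrite Nat.even_odd in H0.
    replace (2 * k + 1)%nat with (S (2 * k)) in H0 by lia. rewrite Nat.div2_succ_double in H0.
    replace (S (2 * k)) with (2 * k + 1)%nat in H0 by lia.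
    replace (sq (Cminus (u (phi j) k) (c k))) with ((fst (u (phi j) k) - lim (2*k)%nat)^2 + (snd (u (phi j) k) - lim (2*k+1)%nat)^2)
      by (unfold sq, c; simpl; ring).
    set (r := / INR (S j)) in *.
    set (p := fst (u (phi j) k) - lim (2*k)%nat) in *. set (q := snd (u (phi j) k) - lim (2*k+1)%nat) in *.
    apply Rabs_le_between in H. apply Rabs_le_between in H0.
    assert (p * p <= r * r) by nra. assert (q * q <= r * r) by nra.
    simpl. lra. }
  destruct (conv_v u B c phi Hu2 Hcv) as [g [Hg Hlm]].
  exists phi, g. split; [|split]; auto.
Qed.
End J0.
Open Scope R_scope.

Definition pr (f g : seqC) (k : nat) : R := fst (f k) * fst (g k) + snd (f k) * snd (g k).
Definition ipR (f g : seqC) : R := Series (pr f g).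
Definition rlc (a : nat -> R) (e : nat -> seqC) (K : nat) : seqC :=
  fun k => (sum_n (fun l => a l * fst (e l k)) K, sum_n (fun l => a l * snd (e l k)) K).
Definition rs (r : R) (f : seqC) : seqC := fun k => (r * fst (f k), r * snd (f k)).
Definition zv : seqC := fun _ => RtoC 0.
Definition uz (e : seqC) : Prop := (forall k, e k = RtoC 0) \/ ipR e e = 1.

Lemma ex_series_ext' (a b : nat -> R) : (forall n, @eq R (a n) (b n)) -> ex_series a -> ex_series b.
Proof. intros H Ha. apply (ex_series_ext a b); auto. Qed.

Lemma pr_abs f g k : Rabs (pr f g k) <= (sq (f k) + sq (g k)) / 2.
Proof.
  unfold pr, sq. destruct (f k) as [a b], (g k) as [c d]; simpl.
  pose proof (sqr0 (a - c)); pose proof (sqr0 (b - d)); pose proof (sqr0 (a + c)); pose proof (sqr0 (b + d)).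
  apply Rabs_le. split; nra.
Qed.

Lemma ip_ex f g : l2 f -> l2 g -> ex_series (pr f g).
Proof.
  intros Hf Hg. apply ex_series_Rabs. apply (ex_series_cmp _ (fun k => (sq (f k) + sq (g k)) / 2)).
  intros; split. apply Rabs_pos. apply pr_abs.
  apply l2_sq in Hf; apply l2_sq in Hg.
  apply (ex_series_ext' (fun k => / 2 * (sq (f k) + sq (g k)))). intros; unfold Rdiv; ring.
  apply ex_series_scal'. apply ex_series_plus'; auto.
Qed.

Lemma ip_bound f g : l2 f -> l2 g -> Rabs (ipR f g) <= (N2 f + N2 g) / 2.
Proof.
  intros Hf Hg. unfold ipR. eapply Rle_trans. apply Series_Rabs.
  apply (ex_series_cmp _ (fun k => (sq (f k) + sq (g k)) / 2)).
  intros; split. apply Rabs_pos. apply pr_abs.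
  apply (ex_series_ext' (fun k => / 2 * (sq (f k) + sq (g k)))). intros; unfold Rdiv; ring.
  apply ex_series_scal'. apply ex_series_plus'; apply l2_sq; auto.
  apply l2_sq in Hf; apply l2_sq in Hg.
  rewrite !N2_sq. replace ((Series (fun k => sq (f k)) + Series (fun k => sq (g k))) / 2) with
    (Series (fun k => / 2 * (sq (f k) + sq (g k)))).
  apply Series_le'. intros k. pose proof (pr_abs f g k). lra.
  apply (ex_series_cmp _ (fun k => (sq (f k) + sq (g k)) / 2)).
  intros; split. apply Rabs_pos. apply pr_abs.
  apply (ex_series_ext' (fun k => / 2 * (sq (f k) + sq (g k)))). intros; unfold Rdiv; ring.
  apply ex_series_scal'. apply ex_series_plus'; auto.
  apply ex_series_scal'. apply ex_series_plus'; auto.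
  rewrite Series_scal_l, Series_plus'; auto. field.
Qed.

Lemma ip_sym f g : ipR f g = ipR g f.
Proof. unfold ipR. apply Series_ext. intros; unfold pr; ring. Qed.

Lemma ip_self f : ipR f f = N2 f.
Proof. unfold ipR. rewrite N2_sq. apply Series_ext. intros; unfold pr, sq; ring. Qed.

Lemma ip_zero_l f g : (forall k, f k = RtoC 0) -> ipR f g = 0.
Proof.
  intros H. unfold ipR. rewrite (Series_ext _ (fun _ => 0)). apply zero_series.
  intros k. unfold pr. rewrite H. simpl. ring.
Qed.

Lemma ip_ext_l f f' g : (forall k, f k = f' k) -> ipR f g = ipR f' g.
Proof. intros H. unfold ipR. apply Series_ext. intros; unfold pr; rewrite H; auto. Qed.

Lemma l2_ext f g : (forall k, g k = f k) -> l2 f -> l2 g.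
Proof. intros H Hf. apply (l2_cmp g f 1); auto. intros k; rewrite H; lra. Qed.

Lemma l2_rs r f : l2 f -> l2 (rs r f).
Proof.
  intros Hf. apply (l2_cmp _ f (r ^ 2)); auto. intros k. unfold rs, sq; simpl. right; ring.
Qed.

Lemma ip_scal_l r f g : l2 f -> l2 g -> ipR (rs r f) g = r * ipR f g.
Proof.
  intros Hf Hg. unfold ipR. rewrite <- Series_scal_l. apply Series_ext. intros; unfold pr, rs; simpl; ring.
Qed.

Lemma ip_sub_l f h g : l2 f -> l2 h -> l2 g -> ipR (seq_sub f h) g = ipR f g - ipR h g.
Proof.
  intros Hf Hh Hg. unfold ipR. rewrite <- Series_minus by (apply ip_ex; auto).
  apply Series_ext. intros; unfold pr, seq_sub, Cminus, Copp, Cplus; simpl; ring.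
Qed.

Lemma sum_scal_r (c : R) (a : nat -> R) n : @eq R (sum_n (fun k => a k * c) n) (sum_n a n * c).
Proof. rewrite Rmult_comm, <- sum_scal. apply sum_ext; intros; ring. Qed.

Lemma rlc_S a e K k : rlc a e (S K) k = Cplus (rlc a e K k) (rs (a (S K)) (e (S K)) k).
Proof. unfold rlc, rs. apply C_ext; simpl; rewrite sumS; reflexivity. Qed.

Lemma rlc_0 a e k : rlc a e 0 k = rs (a 0%nat) (e 0%nat) k.
Proof. unfold rlc, rs. apply C_ext; simpl; rewrite sum0; reflexivity. Qed.

Lemma l2_rlc a e K : (forall l, (l <= K)%nat -> l2 (e l)) -> l2 (rlc a e K).
Proof.
  intros H. induction K.
  - apply (l2_ext (rs (a 0%nat) (e 0%nat))). apply rlc_0. apply l2_rs; auto.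
  - apply (l2_ext (seq_add (rlc a e K) (rs (a (S K)) (e (S K))))). intros; apply rlc_S.
    apply l2_add. apply IHK; auto. apply l2_rs; auto.
Qed.

Lemma ip_rlc_l a e K g : (forall l, (l <= K)%nat -> l2 (e l)) -> l2 g ->
  ipR (rlc a e K) g = sum_n (fun l => a l * ipR (e l) g) K.
Proof.
  intros H Hg. induction K.
  - rewrite sum0. rewrite (ip_ext_l _ (rs (a 0%nat) (e 0%nat))). apply ip_scal_l; auto. apply rlc_0.
  - rewrite sumS, <- IHK by auto.
    rewrite (ip_ext_l _ (seq_add (rlc a e K) (rs (a (S K)) (e (S K))))) by apply rlc_S.
    rewrite <- ip_scal_l by auto. unfold ipR. rewrite <- Series_plus'.
    apply Series_ext; intros; unfold pr, seq_add, rs; simpl; ring.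
    apply ip_ex. apply l2_rlc; auto. auto. apply ip_ex; auto. apply l2_rs; auto.
Qed.

Lemma ip_rlc_r a e K g : (forall l, (l <= K)%nat -> l2 (e l)) -> l2 g ->
  ipR g (rlc a e K) = sum_n (fun l => a l * ipR g (e l)) K.
Proof.
  intros H Hg. rewrite ip_sym, ip_rlc_l; auto. apply sum_ext; intros; rewrite ip_sym; auto.
Qed.

Lemma N2_rlc d e K : (forall l, (l <= K)%nat -> l2 (e l)) ->
  N2 (rlc d e K) <= INR (S K) * sum_n (fun l => d l ^ 2 * N2 (e l)) K.
Proof.
  intros H.
  set (h := fun l k => if (l <=? K)%nat then d l ^ 2 * sq (e l k) else 0).
  assert (Hh : forall l, ex_series (h l)).
  { intros l. unfold h. destruct (Nat.leb_spec l K). apply ex_series_scal'. apply l2_sq; auto.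
    apply zero_series. }
  assert (HS : Series (fun k => sum_n (fun l => h l k) K) = sum_n (fun l => d l ^ 2 * N2 (e l)) K).
  { rewrite Series_sum; auto. apply sum_ext. intros l Hl. unfold h. destruct (Nat.leb_spec l K); try lia.
    rewrite N2_sq, Series_scal_l; auto. }
  rewrite <- HS, <- Series_scal_l, N2_sq. apply Series_le'.
  - intros k. unfold rlc, sq. simpl fst; simpl snd.
    pose proof (cs_count (fun l => d l * fst (e l k)) K). pose proof (cs_count (fun l => d l * snd (e l k)) K).
    assert (@eq R (sum_n (fun l => h l k) K) (sum_n (fun i => (d i * fst (e i k)) ^ 2) K + sum_n (fun i => (d i * snd (e i k)) ^ 2) K)).
    { rewrite <- sum_plus. apply sum_ext. intros l Hl. unfold h, sq. destruct (Nat.leb_spec l K); try lia. ring. }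
    rewrite H2. lra.
  - apply l2_sq. apply l2_rlc; auto.
  - apply ex_series_scal'. apply ex_series_sum; auto.
Qed.
Open Scope R_scope.

Definition nrm (r : seqC) : seqC := if Req_EM_T (N2 r) 0 then zv else rs (/ sqrt (N2 r)) r.

Lemma N2_zero_pt r : l2 r -> N2 r = 0 -> forall k, r k = RtoC 0.
Proof.
  intros Hr H k. rewrite N2_sq in H. pose proof (Series_zero_terms _ (fun k => sq_nonneg _) (proj1 (l2_sq r) Hr) H k).
  unfold sq in H0. destruct (r k) as [a b]. simpl in H0. pose proof (sqr0 a); pose proof (sqr0 b).
  assert (a = 0) by nra. assert (b = 0) by nra. subst; auto.
Qed.

Lemma nrm_l2 r : l2 r -> l2 (nrm r).
Proof. intros H. unfold nrm. destruct (Req_EM_T (N2 r) 0). apply l2_zero. apply l2_rs; auto. Qed.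

Lemma nrm_uz r : l2 r -> uz (nrm r).
Proof.
  intros H. unfold nrm, uz. destruct (Req_EM_T (N2 r) 0). left; intros; reflexivity.
  right. pose proof (N2_nonneg r H). assert (0 < N2 r) by lra.
  rewrite ip_scal_l, ip_sym, ip_scal_l, ip_self; auto. 2: apply l2_rs; auto.
  assert (sqrt (N2 r) * sqrt (N2 r) = N2 r) by (apply sqrt_sqrt; lra). pose proof (sqrt_lt_R0 _ H1).
  set (s := sqrt (N2 r)) in *. rewrite <- H2. field. lra.
Qed.

Lemma nrm_rec r : l2 r -> N2 r <> 0 -> forall k, r k = rs (sqrt (N2 r)) (nrm r) k.
Proof.
  intros H Hn k. unfold nrm. destruct (Req_EM_T (N2 r) 0); try contradiction.
  pose proof (N2_nonneg r H). assert (0 < sqrt (N2 r)) by (apply sqrt_lt_R0; lra).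
  unfold rs. simpl. destruct (r k); apply C_ext; simpl; field; lra.
Qed.

Lemma ip_nrm_r f r : l2 f -> l2 r -> ipR f r = 0 -> ipR f (nrm r) = 0.
Proof.
  intros Hf Hr H. unfold nrm. destruct (Req_EM_T (N2 r) 0).
  rewrite ip_sym; apply ip_zero_l; intros; reflexivity.
  rewrite ip_sym, ip_scal_l, ip_sym, H; auto. ring.
Qed.

Lemma leb_Sn n : (S n <=? n)%nat = false.
Proof. apply Nat.leb_gt; lia. Qed.

Fixpoint GSf (x : nat -> seqC) (n : nat) : nat -> seqC :=
  match n with
  | O => fun _ => nrm (x O)
  | S n' => fun i => if (i <=? n')%nat then GSf x n' i
             else nrm (seq_sub (x (S n')) (rlc (fun i => ipR (x (S n')) (GSf x n' i)) (GSf x n') n'))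
  end.

Lemma GSf_S x n i : GSf x (S n) i = if (i <=? n)%nat then GSf x n i
             else nrm (seq_sub (x (S n)) (rlc (fun i => ipR (x (S n)) (GSf x n i)) (GSf x n) n)).
Proof. reflexivity. Qed.

Definition gs (x : nat -> seqC) (l : nat) : seqC := GSf x l l.

Section GS.
Variable x : nat -> seqC.
Hypothesis Hx : forall l, l2 (x l).

Lemma GSf_stable n i : (i <= n)%nat -> GSf x n i = gs x i.
Proof.
  induction n; intros H.
  - assert (i = 0%nat) by lia. subst; reflexivity.
  - destruct (Nat.eq_dec i (S n)). subst; reflexivity.
    simpl. destruct (Nat.leb_spec i n); try lia. apply IHn; auto.
Qed.

Definition res (n : nat) : seqC := seq_sub (x (S n)) (rlc (fun i => ipR (x (S n)) (gs x i)) (gs x) n).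

Lemma gs_S n : gs x (S n) = nrm (res n).
Proof.
  unfold gs at 1. rewrite GSf_S, leb_Sn. unfold res. f_equal. f_equal.
  apply functional_extensionality; intros k. unfold rlc. apply C_ext; simpl; apply sum_ext; intros;
  rewrite GSf_stable; auto.
Qed.

Lemma gs_0 : gs x 0 = nrm (x 0%nat).
Proof. reflexivity. Qed.

Lemma gs_l2_aux n : forall i, (i <= n)%nat -> l2 (gs x i).
Proof.
  induction n; intros i Hi.
  - assert (i = 0%nat) by lia. subst. rewrite gs_0. apply nrm_l2; auto.
  - destruct (Nat.eq_dec i (S n)); [|apply IHn; lia]. subst. rewrite gs_S. apply nrm_l2.
    unfold res. apply l2_sub; auto. apply l2_rlc; auto.
Qed.

Lemma gs_l2 i : l2 (gs x i).
Proof. apply (gs_l2_aux i); auto. Qed.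

Lemma res_l2 n : l2 (res n).
Proof. unfold res. apply l2_sub; auto. apply l2_rlc. intros; apply gs_l2. Qed.

Definition inspan (w : seqC) (n : nat) : Prop := exists b, forall k, w k = rlc b (gs x) n k.

Lemma inspan_ext w n : inspan w n -> inspan w (S n).
Proof.
  intros [b Hb]. exists (fun j => if (j <=? n)%nat then b j else 0). intros k. rewrite Hb, rlc_S.
  unfold rlc, rs, Cplus. apply C_ext; cbn [fst snd]; rewrite leb_Sn.
  - rewrite Rmult_0_l, Rplus_0_r. apply sum_ext; intros j Hj; destruct (Nat.leb_spec j n); auto; lia.
  - rewrite Rmult_0_l, Rplus_0_r. apply sum_ext; intros j Hj; destruct (Nat.leb_spec j n); auto; lia.
Qed.

Definition Inv (n : nat) : Prop :=
  (forall i, (i <= n)%nat -> uz (gs x i)) /\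
  (forall i j, (i <= n)%nat -> (j <= n)%nat -> i <> j -> ipR (gs x i) (gs x j) = 0) /\
  (forall i, (i <= n)%nat -> inspan (x i) n).

Lemma span_expand w n b : (forall i, (i <= n)%nat -> uz (gs x i)) ->
  (forall i j, (i <= n)%nat -> (j <= n)%nat -> i <> j -> ipR (gs x i) (gs x j) = 0) ->
  (forall k, w k = rlc b (gs x) n k) ->
  forall k, w k = rlc (fun j => ipR w (gs x j)) (gs x) n k.
Proof.
  intros Huz Horth Hw.
  assert (Hip : forall m, (m <= n)%nat -> ipR w (gs x m) = b m * ipR (gs x m) (gs x m)).
  { intros m Hm. rewrite (ip_ext_l w (rlc b (gs x) n)) by auto. rewrite ip_rlc_l by (intros; apply gs_l2 || apply gs_l2).
    rewrite (sum_single _ n m); auto. intros i Hi Him. rewrite Horth; auto. ring. }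
  intros k. rewrite Hw. unfold rlc. apply C_ext; simpl; apply sum_ext; intros j Hj; rewrite Hip by auto;
  destruct (Huz j Hj) as [Hz|Hu]; try (rewrite Hz; simpl; ring); rewrite Hu; ring.
Qed.

Lemma Inv_0 : Inv 0.
Proof.
  split; [|split].
  - intros i Hi. assert (i = 0%nat) by lia. subst. rewrite gs_0. apply nrm_uz; auto.
  - intros; lia.
  - intros i Hi. assert (i = 0%nat) by lia. subst.
    destruct (Req_EM_T (N2 (x 0%nat)) 0).
    + exists (fun _ => 0). intros k. rewrite (N2_zero_pt _ (Hx 0%nat) e k), rlc_0. unfold rs. apply C_ext; cbn [fst snd RtoC]; ring.
    + exists (fun _ => sqrt (N2 (x 0%nat))). intros k. rewrite (nrm_rec _ (Hx 0%nat) n k), rlc_0. reflexivity.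
Qed.

Lemma Inv_S n : Inv n -> Inv (S n).
Proof.
  intros [Huz [Horth Hsp]].
  assert (Hres : forall j, (j <= n)%nat -> ipR (gs x j) (res n) = 0).
  { intros j Hj. destruct (Huz j Hj) as [Hz|Hu].
    - apply ip_zero_l; auto.
    - unfold res. rewrite ip_sym, ip_sub_l; auto. 2: apply l2_rlc; intros; apply gs_l2. 2: apply gs_l2.
      rewrite ip_rlc_l; auto. 2: intros; apply gs_l2. 2: apply gs_l2.
      rewrite (sum_single _ n j); auto. rewrite Hu, ip_sym. ring.
      intros i Hi Hij. rewrite Horth; auto. ring. }
  assert (Hnew : forall j, (j <= n)%nat -> ipR (gs x j) (gs x (S n)) = 0).
  { intros j Hj. rewrite gs_S. apply ip_nrm_r; auto. apply gs_l2. apply res_l2. }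
  split; [|split].
  - intros i Hi. destruct (Nat.eq_dec i (S n)). subst. rewrite gs_S. apply nrm_uz, res_l2. apply Huz; lia.
  - intros i j Hi Hj Hij. destruct (Nat.eq_dec i (S n)); destruct (Nat.eq_dec j (S n)); try lia.
    + subst. rewrite ip_sym. apply Hnew; lia.
    + subst. apply Hnew; lia.
    + apply Horth; lia.
  - intros i Hi. destruct (Nat.eq_dec i (S n)).
    + subst. set (b := fun i => ipR (x (S n)) (gs x i)).
      destruct (Req_EM_T (N2 (res n)) 0).
      * apply inspan_ext. exists b. intros k. pose proof (N2_zero_pt _ (res_l2 n) e k). unfold res, seq_sub in H.
        fold b in H. pose proof (f_equal fst H) as H1; pose proof (f_equal snd H) as H2.
        unfold Cminus, Copp, Cplus in H1, H2; cbn [fst snd RtoC] in H1, H2. apply C_ext; lra.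
      * exists (fun j => if (j <=? n)%nat then b j else sqrt (N2 (res n))). intros k.
        pose proof (nrm_rec _ (res_l2 n) n0 k). rewrite <- gs_S in H. rewrite rlc_S. rewrite leb_Sn.
        set (s := sqrt (N2 (res n))) in *.
        assert (E : rlc (fun j => if (j <=? n)%nat then b j else s) (gs x) n k = rlc b (gs x) n k).
        { unfold rlc. apply C_ext; simpl; apply sum_ext; intros j Hj; destruct (Nat.leb_spec j n); auto; lia. }
        rewrite E. unfold res, seq_sub in H. fold b in H.
        pose proof (f_equal fst H) as H1; pose proof (f_equal snd H) as H2.
        unfold rs, Cminus, Copp, Cplus in H1, H2 |- *; cbn [fst snd] in H1, H2 |- *. apply C_ext; cbn [fst snd]; lra.
    + apply inspan_ext. apply Hsp; lia.
Qed.

Lemma Inv_all n : Inv n.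
Proof. induction n. apply Inv_0. apply Inv_S; auto. Qed.
End GS.

Lemma sum_swap_scal (a : nat -> R) (beta : nat -> nat -> R) (y : nat -> R) K :
  @eq R (sum_n (fun i => a i * sum_n (fun j => beta i j * y j) K) K)
        (sum_n (fun j => sum_n (fun i => a i * beta i j) K * y j) K).
Proof.
  rewrite (sum_ext (fun i => a i * sum_n (fun j => beta i j * y j) K) (fun i => sum_n (fun j => a i * beta i j * y j) K)).
  rewrite <- sum_swap. apply sum_ext. intros j _. rewrite <- sum_scal_r. auto.
  intros i _. rewrite <- sum_scal. apply sum_ext; intros; ring.
Qed.

Lemma GS_main (x : nat -> seqC) K : (forall l, l2 (x l)) ->
  exists e : nat -> seqC, (forall l, l2 (e l)) /\ (forall l, (l <= K)%nat -> uz (e l)) /\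
    forall w a, (forall k, w k = rlc a x K k) -> forall k, w k = rlc (fun j => ipR w (e j)) e K k.
Proof.
  intros Hx. exists (gs x). split; [apply gs_l2; auto|].
  destruct (Inv_all x Hx K) as [Huz [Horth Hsp]]. split; auto.
  intros w a Hw.
  assert (Hb : forall i, exists b, (i <= K)%nat -> forall k, x i k = rlc b (gs x) K k).
  { intros i. destruct (Nat.le_gt_cases i K) as [l|l]. destruct (Hsp i l) as [b Hb]. exists b; auto. exists (fun _ => 0). intros; lia. }
  set (beta := fun i => proj1_sig (constructive_indefinite_description _ (Hb i))).
  assert (Hbeta : forall i, (i <= K)%nat -> forall k, x i k = rlc (beta i) (gs x) K k).
  { intros i. unfold beta. destruct (constructive_indefinite_description _ (Hb i)); auto. }
  apply (span_expand x Hx w K (fun j => sum_n (fun i => a i * beta i j) K)); auto.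
  intros k. rewrite Hw. unfold rlc. apply C_ext; simpl.
  - rewrite <- sum_swap_scal. apply sum_ext. intros i Hi. rewrite (Hbeta i Hi k). reflexivity.
  - rewrite <- sum_swap_scal. apply sum_ext. intros i Hi. rewrite (Hbeta i Hi k). reflexivity.
Qed.
Open Scope R_scope.

Lemma pair_sum (t : nat -> R) n : @eq R (sum_n t (2 * n + 1)) (sum_n (fun i => t (2 * i)%nat + t (2 * i + 1)%nat) n).
Proof.
  induction n.
  - simpl. rewrite sumS, !sum0. reflexivity.
  - replace (2 * S n + 1)%nat with (S (S (2 * n + 1))) by lia. rewrite !sumS, IHn.
    replace (S (2 * n + 1)) with (2 * S n)%nat by lia. replace (S (2 * S n)) with (2 * S n + 1)%nat by lia. ring.
Qed.

Lemma N2_ext f g : (forall k, f k = g k) -> N2 f = N2 g.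
Proof. intros H. unfold N2. apply Series_ext. intros; rewrite H; auto. Qed.

Lemma bounded_max T M : op_bounded_by T M -> op_bounded_by T (Rmax M 0).
Proof.
  intros H f Hf. destruct (H f Hf) as [H1 H2]. split; auto. eapply Rle_trans. apply H2.
  apply Rmult_le_compat_r. apply sqrt_pos. apply Rmax_l.
Qed.

Lemma FR_CL P : finite_rank P -> CL P.
Proof.
  intros [Hlin [[M0 HM0] [n [v [Hv Hrange]]]]].
  set (M := Rmax M0 0). assert (HM : op_bounded_by P M) by (apply bounded_max; auto).
  assert (HM0' : 0 <= M) by apply Rmax_r.
  assert (HPl : forall f, l2 f -> l2 (P f)) by (intros f Hf; apply (HM f Hf)).
  split; [auto|split].
  - intros f g Hf Hg.
    assert (E1 : seq_sub f g = seq_add (seq_scal (RtoC (-1)) g) f).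
    { apply functional_extensionality; intros k. unfold seq_sub, seq_add, seq_scal. destruct (f k), (g k); apply C_ext; simpl; ring. }
    rewrite E1, Hlin; auto. apply functional_extensionality; intros k. unfold seq_sub, seq_add, seq_scal.
    destruct (P f k), (P g k); apply C_ext; simpl; ring.
  - intros u Hu.
    set (x := fun l k => if Nat.even l then v (Nat.div2 l) k else ((- snd (v (Nat.div2 l) k)), fst (v (Nat.div2 l) k)) : C).
    assert (Hxl2 : forall l, l2 (x l)).
    { intros l. apply (l2_cmp _ (v (Nat.div2 l)) 1); auto. intros k. unfold x. destruct (Nat.even l); unfold sq; simpl; lra. }
    set (K := (2 * n + 1)%nat).
    destruct (GS_main x K Hxl2) as [e [Hel [Huz Hexp]]].
    assert (Hrep : forall f, l2 f -> exists a, forall k, P f k = rlc a x K k).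
    { intros f Hf. destruct (Hrange f Hf) as [c Hc].
      exists (fun l => if Nat.even l then fst (c (Nat.div2 l)) else snd (c (Nat.div2 l))). intros k. rewrite Hc.
      assert (Ev : forall i, Nat.even (2 * i) = true /\ Nat.div2 (2 * i) = i /\ Nat.even (2 * i + 1) = false /\ Nat.div2 (2 * i + 1) = i).
      { intros i. split. apply Nat.even_even. split. apply Nat.div2_double. split. apply Nat.even_odd.
        replace (2 * i + 1)%nat with (S (2 * i)) by lia. apply Nat.div2_succ_double. }
      unfold rlc. apply C_ext.
      - rewrite fst_sum. cbn [fst]. unfold K. rewrite pair_sum. apply sum_ext. intros i _.
        destruct (Ev i) as [A1 [A2 [A3 A4]]]. unfold x. rewrite A1, A2, A3, A4. unfold Cmult; cbn [fst snd]. ring.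
      - rewrite snd_sum. cbn [snd]. unfold K. rewrite pair_sum. apply sum_ext. intros i _.
        destruct (Ev i) as [A1 [A2 [A3 A4]]]. unfold x. rewrite A1, A2, A3, A4. unfold Cmult; cbn [fst snd]. ring. }
    set (d := fun j l => ipR (P (u j)) (e l)).
    assert (HPu : forall j k, P (u j) k = rlc (d j) e K k).
    { intros j k. destruct (Hrep (u j) (proj1 (Hu j))) as [a Ha]. apply (Hexp _ a Ha). }
    assert (HNe : forall l, (l <= K)%nat -> N2 (e l) <= 1).
    { intros l Hl. destruct (Huz l Hl) as [Hz|H1].
      - rewrite <- ip_self, ip_zero_l; auto; lra.
      - rewrite <- ip_self, H1; lra. }
    assert (HNPu : forall j, N2 (P (u j)) <= M ^ 2).
    { intros j. destruct (Hu j) as [Hl Hn]. destruct (HM _ Hl) as [H1 H2].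
      pose proof (N2_from_bound _ _ M HM0' H1 Hl H2). pose proof (pow2_ge_0 M).
      eapply Rle_trans. apply H. rewrite <- (Rmult_1_r (M ^ 2)) at 2. apply Rmult_le_compat_l; auto. }
    set (Cst := (M ^ 2 + 1) / 2).
    set (y := fun l j => if (l <=? K)%nat then d j l else 0).
    assert (HC : forall l j, Rabs (y l j) <= Cst).
    { intros l j. unfold y. destruct (Nat.leb_spec l K).
      - eapply Rle_trans. apply ip_bound. apply HPl, Hu. apply Hel.
        pose proof (HNPu j). pose proof (HNe l H). unfold Cst. lra.
      - rewrite Rabs_R0. unfold Cst. pose proof (pow2_ge_0 M). lra. }
    set (phi := diagphi y). exists phi. split. apply (diag_incr y).
    pose proof (diag_conv y (fun _ => Cst) HC) as Hl.
    set (lim := fun i => proj1_sig (constructive_indefinite_description _ (Hl i))).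
    assert (Hlim : forall i j, (i <= j)%nat -> Rabs (y i (phi j) - lim i) <= / INR (S j)).
    { intros i. unfold lim. destruct (constructive_indefinite_description _ (Hl i)); auto. }
    intros eps Heps.
    destruct (exists_big (4 * INR (S K) * INR (S K) / eps)) as [N0 HN0].
    set (N := Nat.max N0 K). exists N. intros a b Ha Hb.
    set (rho := / INR (S N)).
    assert (Hrho : 0 < rho) by (apply Rinv_0_lt_compat, lt_0_INR; lia).
    assert (Hrho1 : rho <= 1) by (unfold rho; rewrite <- Rinv_1; apply Rinv_le_contravar; [lra| apply INR_S_ge1]).
    assert (Hinv : forall j, (N <= j)%nat -> / INR (S j) <= rho).
    { intros j Hj. apply Rinv_le_contravar. apply lt_0_INR; lia. apply le_INR; lia. }
    assert (Hdl : forall l, (l <= K)%nat -> Rabs (d (phi a) l - d (phi b) l) <= 2 * rho).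
    { intros l Hl'. pose proof (Hlim l a ltac:(lia)). pose proof (Hlim l b ltac:(lia)).
      unfold y in H, H0. destruct (Nat.leb_spec l K); try lia.
      pose proof (Hinv a Ha). pose proof (Hinv b Hb).
      replace (d (phi a) l - d (phi b) l) with ((d (phi a) l - lim l) - (d (phi b) l - lim l)) by ring.
      eapply Rle_trans. apply Rabs_triang. rewrite Rabs_Ropp. lra. }
    rewrite (N2_ext _ (rlc (fun l => d (phi a) l - d (phi b) l) e K)).
    2:{ intros k. unfold seq_sub. rewrite !HPu. unfold rlc, Cminus, Copp, Cplus. apply C_ext; cbn [fst snd];
        rewrite <- sum_pm; apply sum_ext; intros; ring. }
    eapply Rle_trans. apply N2_rlc. intros; apply Hel.
    apply Rle_trans with (INR (S K) * sum_n (fun _ => (2 * rho) ^ 2) K).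
    { apply Rmult_le_compat_l. apply pos_INR. apply sum_le. intros l Hl'.
      pose proof (Hdl l Hl'). pose proof (HNe l Hl'). assert (0 <= N2 (e l)) by (apply N2_nonneg; auto).
      assert ((d (phi a) l - d (phi b) l) ^ 2 <= (2 * rho) ^ 2) by (apply pow_maj_Rabs; auto).
      rewrite <- (Rmult_1_r ((2 * rho) ^ 2)). apply Rmult_le_compat; auto. apply pow2_ge_0. }
    rewrite sum_const.
    set (SK := INR (S K)) in *. assert (HSK : 1 <= SK) by apply INR_S_ge1.
    specialize (HN0 N ltac:(unfold N; lia)).
    assert (Hc1 : 4 * SK * SK <= eps * INR (S N)).
    { replace (4 * SK * SK) with (4 * SK * SK / eps * eps) by (field; apply Rgt_not_eq; lra).
      rewrite (Rmult_comm eps). apply Rmult_le_compat_r; lra. }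
    assert (Hprod : rho * INR (S N) = 1) by (unfold rho; field; apply Rgt_not_eq, lt_0_INR; lia).
    assert (Hrr : rho * rho <= rho) by (rewrite <- (Rmult_1_r rho) at 3; apply Rmult_le_compat_l; lra).
    assert (Hc3 : SK * (SK * (2 * rho) ^ 2) <= 4 * SK * SK * rho).
    { simpl. rewrite Rmult_1_r. assert (0 <= SK * SK) by nra.
      replace (SK * (SK * (2 * rho * (2 * rho)))) with (4 * (SK * SK) * (rho * rho)) by ring.
      replace (4 * SK * SK * rho) with (4 * (SK * SK) * rho) by ring. apply Rmult_le_compat_l; nra. }
    assert (Hc4 : 4 * SK * SK * rho <= eps * INR (S N) * rho) by (apply Rmult_le_compat_r; lra).
    replace (eps * INR (S N) * rho) with (eps * (rho * INR (S N))) in Hc4 by ring. rewrite Hprod in Hc4. lra.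
Qed.
Open Scope R_scope.

Lemma bounded_nonneg T M : op_bounded_by T M -> 0 <= M.
Proof.
  intros H. destruct (tv_l2 0 0 (le_n 0)) as [Hl _].
  destruct (H _ Hl) as [H1 H2].
  assert (Hpos : 0 < l2norm (tv 0 0)).
  { unfold l2norm. fold (N2 (tv 0 0)). apply sqrt_lt_R0.
    eapply Rlt_le_trans. 2: apply (sq_le_N2 _ 0 Hl).
    unfold tv, inb. simpl. unfold sq; simpl. pose proof (tvc_sq 0 0 (le_n 0)). simpl in H0.
    rewrite Rmult_1_r in H0. rewrite Rmult_1_r, H0. rewrite Rinv_1. lra. }
  assert (0 <= l2norm (T (tv 0 0))) by apply sqrt_pos.
  destruct (Rle_dec 0 M); auto. assert (M * l2norm (tv 0 0) < 0) by nra. lra.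
Qed.

Lemma lower_bound alpha : l2 alpha -> Rbar_le (Jlim alpha) (ess_norm (rhaly alpha)).
Proof.
  intros Ha. unfold ess_norm. destruct (glb_spec (fun x => exists P, finite_rank P /\ x = opnorm (op_sub (rhaly alpha) P))) as [_ H2].
  apply H2. intros x [P [HP ->]]. unfold opnorm.
  destruct (Glb_Rbar_correct (fun M => op_bounded_by (op_sub (rhaly alpha) P) M)) as [_ H3].
  apply H3. intros M HM. apply (lemmaX alpha Ha P M). apply FR_CL; auto. eapply bounded_nonneg; eauto. auto.
Qed.

Theorem theorem2p6 (alpha : nat -> C) (Halpha : l2 alpha) :
  Rbar_le (Jlim alpha) (ess_norm (rhaly alpha)) /\
  Rbar_le (ess_norm (rhaly alpha)) (Rbar_mult (Finite (2 * sqrt 2)) (Jlim alpha)) /\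
  (compact_op (rhaly alpha) <-> Jlim alpha = Finite 0).
Proof.
  split. apply lower_bound; auto.
  split. apply upper_bound; auto.
  split. apply compact_J0; auto. apply J0_compact; auto.
Qed.
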